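(* Let $\mathcal H_1,\mathcal H_2$ be real Hilbert spaces, $\chi\in]0,+\infty[$, $\boldsymbol f\in\Gamma_0(\mathcal H_1\oplus\mathcal H_2)$, and let $\boldsymbol{\mathcal L}:\mathcal H_1\oplus\mathcal H_2\to\mathbb R$ be differentiable with $\chi$-Lipschitzian gradient, such that $\boldsymbol{\mathcal L}(x_1,\cdot)$ is concave for every $x_1\in\mathcal H_1$ and $\boldsymbol{\mathcal L}(\cdot,x_2)$ is convex for every $x_2\in\mathcal H_2$. Suppose there exists $(z_1,z_2)$ with $\big(-\nabla_1\boldsymbol{\mathcal L}(z_1,z_2),\nabla_2\boldsymbol{\mathcal L}(z_1,z_2)\big)\in\partial\boldsymbol f(z_1,z_2)$. Let $\varepsilon\in]0,1/(\chi+1)[$, let $(\gamma_n)_{n\in\mathbb N}$ be a sequence in $[\varepsilon,(1-\varepsilon)/\chi]$, let $(x_{1,0},x_{2,0})\in\mathcal H_1\oplus\mathcal H_2$, and for $i\in\{1,2\}$ let $(a_{i,n})_n,(b_{i,n})_n,(c_{i,n})_n$ be absolutely summable sequences in $\mathcal H_i$. For every $n$ define $y_{1,n}=x_{1,n}-\gamma_n(\nabla_1\boldsymbol{\mathcal L}(x_{1,n},x_{2,n})+a_{1,n})$, $y_{2,n}=x_{2,n}+\gamma_n(\nabla_2\boldsymbol{\mathcal L}(x_{1,n},x_{2,n})+a_{2,n})$, $(p_{1,n},p_{2,n})=\operatorname{prox}_{\gamma_n\boldsymbol f}(y_{1,n},y_{2,n})+(b_{1,n},b_{2,n})$, $q_{1,n}=p_{1,n}-\gamma_n(\nabla_1\boldsymbol{\mathcal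 L}(p_{1,n},p_{2,n})+c_{1,n})$, $q_{2,n}=p_{2,n}+\gamma_n(\nabla_2\boldsymbol{\mathcal L}(p_{1,n},p_{2,n})+c_{2,n})$, $x_{1,n+1}=x_{1,n}-y_{1,n}+q_{1,n}$, $x_{2,n+1}=x_{2,n}-y_{2,n}+q_{2,n}$. Then there exist $(\overline x_1,\overline x_2)$ with $\overline x_1\in\operatorname{Argmin}_{x\in\mathcal H_1}\big(\boldsymbol f(x,\overline x_2)+\boldsymbol{\mathcal L}(x,\overline x_2)\big)$ and $\overline x_2\in\operatorname{Argmin}_{x\in\mathcal H_2}\big(\boldsymbol f(\overline x_1,x)-\boldsymbol{\mathcal L}(\overline x_1,x)\big)$, such that $x_{1,n}\rightharpoonup\overline x_1$, $p_{1,n}\rightharpoonup\overline x_1$, $x_{2,n}\rightharpoonup\overline x_2$, $p_{2,n}\rightharpoonup\overline x_2$.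
   Context: $\Gamma_0(\mathcal K)$ denotes the proper lower semicontinuous convex functions $\mathcal K\to\left]-\infty,+\infty\right]$; $\partial$ denotes the subdifferential; $\mathcal H_1\oplus\mathcal H_2$ is the product Hilbert space with inner product $\langle x_1,y_1\rangle+\langle x_2,y_2\rangle$. $\nabla_i\boldsymbol{\mathcal L}(x_1,x_2)$ is the partial gradient with respect to the $i$-th variable. For $\varphi\in\Gamma_0(\mathcal K)$, $\operatorname{prox}_\varphi x=\operatorname{argmin}_y\big(\varphi(y)+\tfrac12\|x-y\|^2\big)$. $\rightharpoonup$ denotes weak convergence. *)

(* Defs.v *)
From Stdlib Require Import Reals Lra.
Open Scope R_scope.

Record IPS := {
  car :> Type;
  vzero : car;
  vadd : car -> car -> car;
  vopp : car -> car;
  vscal : R -> car -> car;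
  inner : car -> car -> R;
  vadd_assoc : forall x y z, vadd x (vadd y z) = vadd (vadd x y) z;
  vadd_comm : forall x y, vadd x y = vadd y x;
  vadd_0 : forall x, vadd x vzero = x;
  vadd_opp : forall x, vadd x (vopp x) = vzero;
  vscal_1 : forall x, vscal 1 x = x;
  vscal_assoc : forall a b x, vscal a (vscal b x) = vscal (a * b) x;
  vscal_distr_v : forall a x y, vscal a (vadd x y) = vadd (vscal a x) (vscal a y);
  vscal_distr_s : forall a b x, vscal (a + b) x = vadd (vscal a x) (vscal b x);
  inner_sym : forall x y, inner x y = inner y x;
  inner_add_l : forall x y z, inner (vadd x y) z = inner x z + inner y z;
  inner_scal_l : forall a x y, inner (vscal a x) y = a * inner x y;
  inner_pos : forall x, 0 <= inner x x;
  inner_def : forall x, inner x x = 0 -> x = vzero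
}.

Arguments vzero {_}.
Arguments vadd {_} _ _.
Arguments vopp {_} _.
Arguments vscal {_} _ _.
Arguments inner {_} _ _.

Definition vsub {E : IPS} (x y : E) : E := vadd x (vopp y).
Definition norm {E : IPS} (x : E) : R := sqrt (inner x x).

Definition strong_cv {E : IPS} (u : nat -> E) (l : E) : Prop :=
  Un_cv (fun n => norm (vsub (u n) l)) 0.
Definition weak_cv {E : IPS} (u : nat -> E) (l : E) : Prop :=
  forall y : E, Un_cv (fun n => inner (u n) y) (inner l y).

Definition complete (E : IPS) : Prop :=
  forall u : nat -> E,
    (forall eps, 0 < eps -> exists N, forall m n, (N <= m)%nat -> (N <= n)%nat ->
        norm (vsub (u m) (u n)) < eps) ->
    exists l, strong_cv u l.

Record Hilbert := { hips :> IPS; hcomplete : complete hips }.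

Definition pinner {E F : IPS} (x y : E * F) : R := inner (fst x) (fst y) + inner (snd x) (snd y).

Definition prodIPS (E F : IPS) : IPS.
Proof.
refine {| car := (E * F)%type;
  vzero := (vzero, vzero);
  vadd := fun x y => (vadd (fst x) (fst y), vadd (snd x) (snd y));
  vopp := fun x => (vopp (fst x), vopp (snd x));
  vscal := fun a x => (vscal a (fst x), vscal a (snd x));
  inner := pinner |}.
- intros; simpl; now rewrite !vadd_assoc.
- intros; simpl; now rewrite (vadd_comm _ (fst x)), (vadd_comm _ (snd x)).
- intros [x1 x2]; simpl; now rewrite !vadd_0.
- intros; simpl; now rewrite !vadd_opp.
- intros [x1 x2]; simpl; now rewrite !vscal_1.
- intros; simpl; now rewrite !vscal_assoc.
- intros; simpl; now rewrite !vscal_distr_v.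
- intros; simpl; now rewrite !vscal_distr_s.
- intros; unfold pinner; now rewrite (inner_sym _ (fst x)), (inner_sym _ (snd x)).
- intros; unfold pinner; simpl; rewrite !inner_add_l; ring.
- intros; unfold pinner; simpl; rewrite !inner_scal_l; ring.
- intros; unfold pinner; simpl; pose proof (inner_pos _ (fst x)); pose proof (inner_pos _ (snd x)); lra.
- intros [x1 x2] H; unfold pinner in H; simpl in H.
  pose proof (inner_pos _ x1); pose proof (inner_pos _ x2).
  rewrite (inner_def _ x1), (inner_def _ x2); auto; lra.
Defined.

Inductive ereal := Fin (r : R) | PInf.

Definition ele (a b : ereal) : Prop :=
  match a, b with
  | _, PInf => True
  | PInf, Fin _ => False
  | Fin x, Fin y => x <= y
  end.

Definition eaddr (a : ereal) (r : R) : ereal :=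
  match a with Fin x => Fin (x + r) | PInf => PInf end.

(** scaling by a positive real *)
Definition escal (g : R) (a : ereal) : ereal :=
  match a with Fin x => Fin (g * x) | PInf => PInf end.

Definition ecomb (t : R) (a b : ereal) : ereal :=
  match a, b with Fin x, Fin y => Fin (t * x + (1 - t) * y) | _, _ => PInf end.

Definition proper {E : IPS} (f : E -> ereal) : Prop := exists x, f x <> PInf.

Definition convex_fun {E : IPS} (f : E -> ereal) : Prop :=
  forall (x y : E) t, 0 < t < 1 ->
    ele (f (vadd (vscal t x) (vscal (1 - t) y))) (ecomb t (f x) (f y)).

Definition lsc {E : IPS} (f : E -> ereal) : Prop :=
  forall (r : R) (u : nat -> E) (x : E),
    strong_cv u x -> (forall n, ele (f (u n)) (Fin r)) -> ele (f x) (Fin r).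

Definition Gamma0 {E : IPS} (f : E -> ereal) : Prop :=
  proper f /\ convex_fun f /\ lsc f.

Definition subdiff {E : IPS} (f : E -> ereal) (x u : E) : Prop :=
  f x <> PInf /\
  forall y : E, ele (eaddr (f x) (inner (vsub y x) u)) (f y).

Definition is_prox {E : IPS} (g : R) (f : E -> ereal) (y p : E) : Prop :=
  forall q : E,
    ele (eaddr (escal g (f p)) (/2 * (norm (vsub y p)) ^ 2))
        (eaddr (escal g (f q)) (/2 * (norm (vsub y q)) ^ 2)).

Definition convex_real {E : IPS} (h : E -> R) : Prop :=
  forall (x y : E) t, 0 < t < 1 ->
    h (vadd (vscal t x) (vscal (1 - t) y)) <= t * h x + (1 - t) * h y.

Definition is_gradient {E : IPS} (L : E -> R) (G : E -> E) : Prop :=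
  forall x : E, forall eps, 0 < eps -> exists delta, 0 < delta /\
    forall h : E, norm h < delta ->
      Rabs (L (vadd x h) - L x - inner (G x) h) <= eps * norm h.

Definition lipschitz {E F : IPS} (k : R) (T : E -> F) : Prop :=
  forall x y : E, norm (vsub (T x) (T y)) <= k * norm (vsub x y).

Definition abs_summable {E : IPS} (a : nat -> E) : Prop :=
  exists l, Un_cv (fun N => sum_f_R0 (fun n => norm (a n)) N) l.

(* Main.v *)
Require Import Defs.
From Stdlib Require Import Reals Lra Lia Psatz Classical ClassicalEpsilon.
Open Scope R_scope.

Arguments vadd_assoc {_}. Arguments vadd_comm {_}. Arguments vadd_0 {_}. Arguments vadd_opp {_}.
Arguments vscal_1 {_}. Arguments vscal_assoc {_}. Arguments vscal_distr_v {_}. Arguments vscal_distr_s {_}.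
Arguments inner_sym {_}. Arguments inner_add_l {_}. Arguments inner_scal_l {_}. Arguments inner_pos {_}. Arguments inner_def {_}.

Section Basic.
Context {E : IPS}.
Implicit Types x y z u v w : E.

Lemma vadd_0_l x : vadd vzero x = x.
Proof. rewrite vadd_comm; apply vadd_0. Qed.

Lemma inner_zero_l y : inner (@vzero E) y = 0.
Proof.
  assert (H : inner (@vzero E) y = inner (@vzero E) y + inner (@vzero E) y).
  { rewrite <- inner_add_l, vadd_0; reflexivity. }
  lra.
Qed.

Lemma inner_zero_r y : inner y (@vzero E) = 0.
Proof. rewrite inner_sym; apply inner_zero_l. Qed.

Lemma inner_opp_l x y : inner (vopp x) y = - inner x y.
Proof.
  assert (H : inner (vadd x (vopp x)) y = 0) by (rewrite vadd_opp; apply inner_zero_l).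
  rewrite inner_add_l in H; lra.
Qed.

Lemma inner_add_r x y z : inner x (vadd y z) = inner x y + inner x z.
Proof. rewrite inner_sym, inner_add_l, (inner_sym y), (inner_sym z); reflexivity. Qed.

Lemma inner_scal_r a x y : inner x (vscal a y) = a * inner x y.
Proof. rewrite inner_sym, inner_scal_l, inner_sym; reflexivity. Qed.

Lemma inner_opp_r x y : inner x (vopp y) = - inner x y.
Proof. rewrite inner_sym, inner_opp_l, inner_sym; reflexivity. Qed.

Lemma inner_sub_l x y z : inner (vsub x y) z = inner x z - inner y z.
Proof. unfold vsub; rewrite inner_add_l, inner_opp_l; ring. Qed.

Lemma inner_sub_r x y z : inner z (vsub x y) = inner z x - inner z y.
Proof. unfold vsub; rewrite inner_add_r, inner_opp_r; ring. Qed.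

Lemma vsub_eq0 u v : vsub u v = vzero -> u = v.
Proof.
  intro H. unfold vsub in H.
  rewrite <- (vadd_0 u), <- (vadd_opp v), (vadd_comm v), vadd_assoc, H, vadd_0_l; reflexivity.
Qed.

Lemma vext u v : (forall w, inner u w = inner v w) -> u = v.
Proof.
  intro H. apply vsub_eq0, inner_def.
  rewrite inner_sub_l, H; ring.
Qed.

End Basic.

Ltac iexp := repeat (rewrite ?inner_add_l, ?inner_scal_l, ?inner_opp_l, ?inner_sub_l,
  ?inner_zero_l, ?inner_add_r, ?inner_scal_r, ?inner_opp_r, ?inner_sub_r, ?inner_zero_r).
Ltac iexp_in H := repeat (rewrite ?inner_add_l, ?inner_scal_l, ?inner_opp_l, ?inner_sub_l,
  ?inner_zero_l, ?inner_add_r, ?inner_scal_r, ?inner_opp_r, ?inner_sub_r, ?inner_zero_r in H).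
Ltac vsolve := apply vext; let w := fresh "w" in intro w; iexp; ring.

Section Norms.
Context {E : IPS}.
Implicit Types x y z u v w : E.

Lemma nsq x : norm x ^ 2 = inner x x.
Proof. unfold norm; simpl; rewrite Rmult_1_r; apply sqrt_sqrt, inner_pos. Qed.

Lemma nsq' x : norm x * norm x = inner x x.
Proof. rewrite <- nsq; ring. Qed.

Lemma norm_pos x : 0 <= norm x.
Proof. apply sqrt_pos. Qed.

Lemma norm_zero : norm (@vzero E) = 0.
Proof. unfold norm; rewrite inner_zero_l; apply sqrt_0. Qed.

Lemma norm_eq0 x : norm x = 0 -> x = vzero.
Proof. intro H; apply inner_def; rewrite <- nsq, H; ring. Qed.

Lemma norm_le_sq x r : 0 <= r -> inner x x <= r * r -> norm x <= r.
Proof.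
  intros Hr H. unfold norm. rewrite <- (sqrt_square r) by lra.
  apply sqrt_le_1_alt; lra.
Qed.

Lemma sq_le_norm x r : 0 <= r -> norm x <= r -> inner x x <= r * r.
Proof.
  intros Hr H. rewrite <- nsq'. pose proof (norm_pos x). nra.
Qed.

Lemma CS_sq x y : inner x y ^ 2 <= inner x x * inner y y.
Proof.
  destruct (Req_dec (inner y y) 0) as [H0|H0].
  - apply inner_def in H0; subst y. rewrite inner_zero_r, inner_zero_r. nra.
  - pose proof (inner_pos y).
    assert (Hq : forall t, 0 <= inner x x + 2*t*inner x y + t*t*inner y y).
    { intro t. pose proof (inner_pos (vadd x (vscal t y))) as Hp. iexp_in Hp.
      rewrite (inner_sym y x) in Hp. lra. }
    assert (Hyy : 0 < inner y y) by lra.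
    specialize (Hq (- inner x y / inner y y)).
    assert (Heq : inner x x + 2 * (- inner x y / inner y y) * inner x y +
       - inner x y / inner y y * (- inner x y / inner y y) * inner y y
       = inner x x - inner x y ^ 2 / inner y y) by (field; lra).
    rewrite Heq in Hq.
    apply Rmult_le_reg_r with (/ inner y y). apply Rinv_0_lt_compat; lra.
    replace (inner x x * inner y y * / inner y y) with (inner x x) by (field; lra).
    unfold Rdiv in Hq. lra.
Qed.

Lemma CS x y : Rabs (inner x y) <= norm x * norm y.
Proof.
  pose proof (CS_sq x y). pose proof (norm_pos x). pose proof (norm_pos y).
  rewrite <- nsq', <- (nsq' y) in H.
  apply Rle_trans with (Rabs (norm x * norm y)).
  - apply Rsqr_le_abs_0; unfold Rsqr; nra.
  - rewrite Rabs_pos_eq by nra; lra.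
Qed.

Lemma CS_le x y : inner x y <= norm x * norm y.
Proof. pose proof (CS x y). pose proof (Rle_abs (inner x y)). lra. Qed.

Lemma norm_triangle x y : norm (vadd x y) <= norm x + norm y.
Proof.
  pose proof (norm_pos x). pose proof (norm_pos y).
  apply norm_le_sq; [lra|]. iexp. rewrite (inner_sym y x).
  pose proof (CS_le x y). rewrite <- nsq', <- (nsq' y). nra.
Qed.

Lemma norm_scal a x : norm (vscal a x) = Rabs a * norm x.
Proof.
  unfold norm. iexp. rewrite <- Rmult_assoc, sqrt_mult.
  - rewrite <- sqrt_Rsqr_abs; reflexivity.
  - nra.
  - apply inner_pos.
Qed.

Lemma norm_opp x : norm (vopp x) = norm x.
Proof. unfold norm; iexp; f_equal; ring. Qed.

Lemma norm_sub_sym x y : norm (vsub x y) = norm (vsub y x).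
Proof. unfold norm; iexp; rewrite (inner_sym x y); f_equal; ring. Qed.

Lemma norm_sub_triangle x y : norm (vsub x y) <= norm x + norm y.
Proof. unfold vsub; rewrite <- (norm_opp y); apply norm_triangle. Qed.

Lemma norm_sub3 x y z : norm (vsub x z) <= norm (vsub x y) + norm (vsub y z).
Proof.
  replace (vsub x z) with (vadd (vsub x y) (vsub y z)) by vsolve.
  apply norm_triangle.
Qed.

Lemma nsq_add x y : inner (vadd x y) (vadd x y) = inner x x + 2 * inner x y + inner y y.
Proof. iexp; rewrite (inner_sym y x); ring. Qed.

Lemma nsq_sub x y : inner (vsub x y) (vsub x y) = inner x x - 2 * inner x y + inner y y.
Proof. iexp; rewrite (inner_sym y x); ring. Qed.


End Norms.


Lemma cv_ext (u v : nat -> R) l : (forall n, u n = v n) -> Un_cv u l -> Un_cv v l.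
Proof. intros H Hu e He; destruct (Hu e He) as [N HN]; exists N; intros n Hn; rewrite <- H; auto. Qed.

Lemma cv_const c : Un_cv (fun _ => c) c.
Proof. intros e He; exists 0%nat; intros; unfold R_dist; rewrite Rminus_diag, Rabs_R0; lra. Qed.

Lemma cv_scal (u : nat -> R) l c : Un_cv u l -> Un_cv (fun n => c * u n) (c * l).
Proof. intro H; apply CV_mult; [apply cv_const | exact H]. Qed.

Lemma le_lim (u : nat -> R) l a N : (forall n, (N <= n)%nat -> a <= u n) -> Un_cv u l -> a <= l.
Proof.
  intros H Hu. destruct (Rle_lt_dec a l) as [|Hlt]; [auto|].
  destruct (Hu (a - l)) as [M HM]; [lra|].
  specialize (HM (max N M) ltac:(lia)). specialize (H (max N M) ltac:(lia)).
  unfold R_dist in HM. apply Rabs_def2 in HM. lra.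
Qed.

Lemma lim_le (u : nat -> R) l a N : (forall n, (N <= n)%nat -> u n <= a) -> Un_cv u l -> l <= a.
Proof.
  intros H Hu. assert (Hu' : Un_cv (fun n => - u n) (- l)) by (apply CV_opp in Hu; exact Hu).
  assert (- a <= - l) by (apply (le_lim (fun n => - u n) _ _ N); [intros n Hn; specialize (H n Hn); lra | exact Hu']).
  lra.
Qed.

Lemma lim_le_lim (u v : nat -> R) l1 l2 N : (forall n, (N <= n)%nat -> u n <= v n) ->
  Un_cv u l1 -> Un_cv v l2 -> l1 <= l2.
Proof.
  intros H Hu Hv. assert (0 <= l2 - l1).
  { apply (le_lim (fun n => v n - u n) _ _ N); [intros n Hn; specialize (H n Hn); lra|].
    apply CV_minus; auto. }
  lra.
Qed.

Lemma squeeze (u v w : nat -> R) l N : (forall n, (N <= n)%nat -> u n <= v n <= w n) ->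
  Un_cv u l -> Un_cv w l -> Un_cv v l.
Proof.
  intros H Hu Hw e He. destruct (Hu e He) as [N1 H1]. destruct (Hw e He) as [N2 H2].
  exists (max N (max N1 N2)). intros n Hn.
  specialize (H n ltac:(lia)). specialize (H1 n ltac:(lia)). specialize (H2 n ltac:(lia)).
  unfold R_dist in *. apply Rabs_def2 in H1. apply Rabs_def2 in H2. apply Rabs_def1; lra.
Qed.

Lemma cv0_abs (u : nat -> R) : Un_cv (fun n => Rabs (u n)) 0 -> Un_cv u 0.
Proof.
  intros H e He. destruct (H e He) as [N HN]. exists N. intros n Hn. specialize (HN n Hn).
  unfold R_dist in *. rewrite Rminus_0_r in *. rewrite Rabs_Rabsolu in HN. auto.
Qed.

Lemma cv0_le (u v : nat -> R) N : (forall n, (N <= n)%nat -> Rabs (u n) <= v n) -> Un_cv v 0 -> Un_cv u 0.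
Proof.
  intros H Hv. apply cv0_abs. apply (squeeze (fun _ => 0) _ v 0 N); [|apply cv_const|auto].
  intros n Hn; specialize (H n Hn); split; [apply Rabs_pos|auto].
Qed.

Lemma cv_shift (u : nat -> R) l : Un_cv (fun n => u (S n)) l -> Un_cv u l.
Proof.
  intros H e He. destruct (H e He) as [N HN]. exists (S N). intros n Hn.
  destruct n; [lia|]. apply HN; lia.
Qed.

Lemma cv_shift' (u : nat -> R) l : Un_cv u l -> Un_cv (fun n => u (S n)) l.
Proof. intros H e He. destruct (H e He) as [N HN]. exists N. intros n Hn. apply HN; lia. Qed.

Lemma cv_sub_index (u : nat -> R) (tau : nat -> nat) l :
  (forall k, (k <= tau k)%nat) -> Un_cv u l -> Un_cv (fun k => u (tau k)) l.
Proof. intros Ht H e He. destruct (H e He) as [N HN]. exists N. intros n Hn. apply HN. specialize (Ht n); lia. Qed.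

Lemma cv_bounded (u : nat -> R) l : Un_cv u l -> exists M, forall n, Rabs (u n) <= M.
Proof.
  intro H. destruct (H 1 ltac:(lra)) as [N HN].
  assert (Hb : forall m, exists M, forall n, (n <= m)%nat -> Rabs (u n) <= M).
  { induction m as [|m [M HM]].
    - exists (Rabs (u 0%nat)). intros n Hn. replace n with 0%nat by lia. lra.
    - exists (Rmax M (Rabs (u (S m)))). intros n Hn. destruct (Nat.eq_dec n (S m)).
      + subst; apply Rmax_r.
      + eapply Rle_trans; [apply HM; lia| apply Rmax_l]. }
  destruct (Hb N) as [M HM]. exists (Rmax M (Rabs l + 1)). intros n.
  destruct (Nat.le_gt_cases n N).
  - eapply Rle_trans; [apply HM; auto|apply Rmax_l].
  - eapply Rle_trans; [|apply Rmax_r]. specialize (HN n ltac:(lia)). unfold R_dist in HN.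
    pose proof (Rabs_triang_inv (u n) l). lra.
Qed.

Lemma inv_small e : 0 < e -> exists N, forall n, (N <= n)%nat -> / (INR n + 1) < e.
Proof.
  intro He. destruct (archimed_cor1 e He) as [N [HN HN0]]. exists N. intros n Hn.
  apply Rle_lt_trans with (/ INR N); auto.
  apply Rinv_le_contravar. apply lt_0_INR; lia.
  apply le_INR in Hn. lra.
Qed.

Lemma cv_inv : Un_cv (fun n => / (INR n + 1)) 0.
Proof.
  intros e He. destruct (inv_small e He) as [N HN]. exists N. intros n Hn.
  unfold R_dist. rewrite Rminus_0_r. rewrite Rabs_pos_eq. apply HN; auto.
  left; apply Rinv_0_lt_compat. pose proof (pos_INR n); lra.
Qed.

Definition summable (e : nat -> R) := exists l, Un_cv (sum_f_R0 e) l.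

Lemma summable_plus e1 e2 : summable e1 -> summable e2 -> summable (fun n => e1 n + e2 n).
Proof.
  intros [l1 H1] [l2 H2]. exists (l1 + l2).
  apply (cv_ext (fun N => sum_f_R0 e1 N + sum_f_R0 e2 N)); [intro; rewrite plus_sum; auto|].
  apply CV_plus; auto.
Qed.

Lemma summable_scal e c : summable e -> summable (fun n => c * e n).
Proof.
  intros [l H]. exists (c * l).
  apply (cv_ext (fun N => c * sum_f_R0 e N)).
  - intro N. rewrite scal_sum. apply sum_eq. intros; ring.
  - apply cv_scal; auto.
Qed.

Lemma summable_terms e : summable e -> Un_cv e 0.
Proof.
  intros [l H]. apply cv_shift.
  apply (cv_ext (fun n => sum_f_R0 e (S n) - sum_f_R0 e n)); [intro; simpl; ring|].
  replace 0 with (l - l) by ring. apply CV_minus; auto. apply cv_shift'; auto.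
Qed.

Lemma summable_nonneg_bound e : (forall n, 0 <= e n) -> summable e -> exists S, forall n, sum_f_R0 e n <= S.
Proof.
  intros Hp [l H]. exists l. apply growing_ineq; auto.
  intro n; simpl; specialize (Hp (S n)); lra.
Qed.

Lemma quasi_fejer (al e : nat -> R) : (forall n, 0 <= al n) -> (forall n, 0 <= e n) -> summable e ->
  (forall n, al (S n) <= al n + e n) -> exists l, Un_cv al l.
Proof.
  intros Ha He Hs Hf. destruct Hs as [Sm HS].
  set (be := fun n => al (S n) - sum_f_R0 e n).
  assert (Hd : Un_decreasing be).
  { intro n; unfold be; simpl. specialize (Hf (S n)). lra. }
  assert (Hl : has_lb be).
  { exists Sm. intros x [n Hn]. rewrite Hn. unfold opp_seq, be.
    assert (sum_f_R0 e n <= Sm) by (apply growing_ineq; auto; intro k; simpl; specialize (He (S k)); lra).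
    specialize (Ha (S n)). lra. }
  destruct (decreasing_cv be Hd Hl) as [l' Hl'].
  exists (l' + Sm). apply cv_shift.
  apply (cv_ext (fun n => be n + sum_f_R0 e n)); [intro; unfold be; ring|].
  apply CV_plus; auto.
Qed.

Definition sincr (phi : nat -> nat) := forall k, (phi k < phi (S k))%nat.

Lemma sincr_ge phi : sincr phi -> forall k, (k <= phi k)%nat.
Proof. intros H k; induction k; [lia|]. specialize (H k); lia. Qed.

Lemma sincr_mono phi : sincr phi -> forall k m, (k <= m)%nat -> (phi k <= phi m)%nat.
Proof. intros H k m Hkm; induction Hkm; [lia|]. specialize (H m); lia. Qed.

Lemma sincr_comp phi psi : sincr phi -> sincr psi -> sincr (fun k => phi (psi k)).
Proof.
  intros H1 H2 k. specialize (H2 k). assert (H := sincr_mono phi H1 (S (psi k)) (psi (S k)) H2).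
  specialize (H1 (psi k)). lia.
Qed.

Lemma cv_subseq (u : nat -> R) phi l : sincr phi -> Un_cv u l -> Un_cv (fun k => u (phi k)) l.
Proof. intros H; apply cv_sub_index; apply sincr_ge; auto. Qed.

Lemma BW_extract (u : nat -> R) M : (forall n, Rabs (u n) <= M) ->
  exists phi l, sincr phi /\ Un_cv (fun k => u (phi k)) l.
Proof.
  intro HM. destruct (Bolzano_Weierstrass u (fun c => -M <= c <= M) (compact_P3 (-M) M)) as [l Hl].
  { intro n; specialize (HM n); split; [pose proof (Rabs_pos (u n)); pose proof (Rle_abs (- u n)); rewrite Rabs_Ropp in *; lra| pose proof (Rle_abs (u n)); lra]. }
  assert (Hsel : forall N k, exists p, (N <= p)%nat /\ Rabs (u p - l) < / (INR k + 1)).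
  { intros N k. assert (Hp : 0 < / (INR k + 1)) by (apply Rinv_0_lt_compat; pose proof (pos_INR k); lra).
    destruct (Hl (disc l (mkposreal _ Hp)) N) as [p [Hp1 Hp2]].
    - exists (mkposreal _ Hp). intros y Hy; exact Hy.
    - exists p; split; auto. }
  set (sel := fun N k => proj1_sig (constructive_indefinite_description _ (Hsel N k))).
  assert (Hsel1 : forall N k, (N <= sel N k)%nat /\ Rabs (u (sel N k) - l) < / (INR k + 1)).
  { intros N k. unfold sel. destruct (constructive_indefinite_description _ (Hsel N k)); simpl; auto. }
  set (phi := fix phi k := match k with 0%nat => sel 0%nat 0%nat | S k => sel (S (phi k)) (S k) end).
  exists phi, l. split.
  - intro k. simpl. destruct (Hsel1 (S (phi k)) (S k)); lia.
  - assert (H0 : Un_cv (fun k => u (phi k) - l) 0).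
    { apply (cv0_le _ (fun n => / (INR n + 1)) 0); [|exact cv_inv].
      intros n _. destruct n; simpl; [apply Rlt_le, (Hsel1 0%nat 0%nat)|].
      apply Rlt_le, (Hsel1 (S (phi n)) (S n)). }
    apply (cv_ext (fun k => (u (phi k) - l) + l)); [intro; ring|].
    pose proof (CV_plus _ _ _ _ H0 (cv_const l)) as H1. rewrite Rplus_0_l in H1. exact H1.
Qed.


Section Proj.
Context {E : IPS}.
Implicit Types x y z u v w : E.

Definition cvx_set (C : E -> Prop) := forall u v t, C u -> C v -> 0 < t < 1 ->
  C (vadd (vscal t u) (vscal (1 - t) v)).
Definition cl_set (C : E -> Prop) := forall (s : nat -> E) y, strong_cv s y -> (forall n, C (s n)) -> C y.

Lemma small_t a b : 0 <= b -> (forall t, 0 < t < 1 -> a <= t * b) -> a <= 0.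
Proof.
  intros Hb H. destruct (Rle_lt_dec a 0) as [|Ha]; auto.
  destruct (Req_dec b 0) as [Hb0|Hb0].
  - specialize (H (1/2) ltac:(lra)). subst; lra.
  - set (t := Rmin (1/2) (a / (2 * b))).
    assert (Ht1 : t <= 1/2) by apply Rmin_l.
    assert (Ht2 : t <= a / (2 * b)) by apply Rmin_r.
    assert (Ht0 : 0 < t). { unfold t. apply Rmin_glb_lt; [lra|]. apply Rdiv_lt_0_compat; lra. }
    specialize (H t ltac:(lra)).
    assert (t * b <= a / (2 * b) * b) by (apply Rmult_le_compat_r; lra).
    replace (a / (2 * b) * b) with (a / 2) in H0 by (field; lra). lra.
Qed.

Lemma parallelogram x u v :
  inner (vsub u v) (vsub u v) = 2 * inner (vsub x u) (vsub x u) + 2 * inner (vsub x v) (vsub x v)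
    - 4 * inner (vsub x (vadd (vscal (1/2) u) (vscal (1 - 1/2) v))) (vsub x (vadd (vscal (1/2) u) (vscal (1 - 1/2) v))).
Proof.
  iexp. rewrite (inner_sym v u), (inner_sym u x), (inner_sym v x). field.
Qed.

Lemma projection (hc : complete E) (C : E -> Prop) x0 x : C x0 -> cvx_set C -> cl_set C ->
  exists p, C p /\ forall u, C u -> inner (vsub x p) (vsub u p) <= 0.
Proof.
  intros H0 Hcv Hcl.
  set (D := fun r => exists u, C u /\ r = - inner (vsub x u) (vsub x u)).
  assert (HDb : bound D). { exists 0. intros r [u [_ ->]]. pose proof (inner_pos (vsub x u)); lra. }
  destruct (completeness D HDb (ex_intro _ _ (ex_intro _ x0 (conj H0 eq_refl)))) as [m [Hm1 Hm2]].
  set (d := - m).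
  assert (Hd1 : forall u, C u -> d <= inner (vsub x u) (vsub x u)).
  { intros u Hu. assert (D (- inner (vsub x u) (vsub x u))) by (exists u; split; auto). specialize (Hm1 _ H). unfold d; lra. }
  assert (Hd2 : forall e, 0 < e -> exists u, C u /\ inner (vsub x u) (vsub x u) < d + e).
  { intros e He. apply NNPP. intro Hn.
    assert (is_upper_bound D (m - e)).
    { intros r [u [Hu ->]]. destruct (Rle_lt_dec (- inner (vsub x u) (vsub x u)) (m - e)); auto.
      exfalso; apply Hn; exists u; split; auto; unfold d; lra. }
    specialize (Hm2 _ H); lra. }
  assert (Hsel : forall n : nat, exists u, C u /\ inner (vsub x u) (vsub x u) < d + / (INR n + 1)).
  { intro n; apply Hd2. apply Rinv_0_lt_compat; pose proof (pos_INR n); lra. }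
  set (us := fun n => proj1_sig (constructive_indefinite_description _ (Hsel n))).
  assert (Hus : forall n, C (us n) /\ inner (vsub x (us n)) (vsub x (us n)) < d + / (INR n + 1)).
  { intro n; unfold us; destruct (constructive_indefinite_description _ (Hsel n)); auto. }
  assert (Hd0 : 0 <= d). { pose proof (Hd1 x0 H0). specialize (Hd2 1 ltac:(lra)). destruct Hd2 as [u [Hu Hu']].
    assert (Hm1' : forall r, D r -> r <= 0). { intros r [v [_ ->]]. pose proof (inner_pos (vsub x v)); lra. }
    assert (m <= 0) by (apply Hm2; intros r Hr; auto). unfold d; lra. }
  assert (Hcau : forall n k, inner (vsub (us n) (us k)) (vsub (us n) (us k)) <= 2 * / (INR n + 1) + 2 * / (INR k + 1)).
  { intros n k. rewrite (parallelogram x).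
    destruct (Hus n) as [Hn1 Hn2]. destruct (Hus k) as [Hk1 Hk2].
    assert (Hmid := Hd1 _ (Hcv _ _ (1/2) Hn1 Hk1 ltac:(lra))). lra. }
  destruct (hc us) as [p Hp].
  { intros e He. destruct (inv_small (e * e / 4)) as [N HN]. { apply Rdiv_lt_0_compat; nra. }
    exists N. intros n k Hn Hk. specialize (HN n Hn) as HNn. specialize (HN k Hk) as HNk.
    assert (Hle := Hcau n k).
    unfold norm.
    rewrite <- (sqrt_square e) by lra. apply sqrt_lt_1_alt. split; [apply inner_pos|]. lra. }
  assert (HCp : C p) by (apply (Hcl us); auto; intro; apply Hus).
  exists p; split; auto.
  assert (Hxp : inner (vsub x p) (vsub x p) <= d).
  { set (r := fun n => norm (vsub (us n) p)).
    assert (Hr : Un_cv r 0) by exact Hp.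
    apply (lim_le_lim (fun _ => inner (vsub x p) (vsub x p))
       (fun n => d + / (INR n + 1) + 2 * (d + 2) * r n + r n * r n) _ _ 0).
    - intros n _. pose proof (norm_sub3 x (us n) p) as Htri.
      rewrite <- nsq'. set (q := norm (vsub x (us n))). fold q in Htri.
      assert (Hq2 : q * q < d + / (INR n + 1)) by (unfold q; rewrite nsq'; apply Hus).
      assert (Hq0 : 0 <= q) by apply norm_pos. assert (Hr0 : 0 <= r n) by apply norm_pos.
      assert (Hn1 : / (INR n + 1) <= 1).
      { rewrite <- Rinv_1. apply Rinv_le_contravar; [lra|]. pose proof (pos_INR n); lra. }
      assert (Hqb : q <= d + 2) by nra.
      pose proof (norm_pos (vsub x p)). fold (r n) in Htri. nra.
    - apply cv_const.
    - pose proof (CV_plus _ _ _ _ (CV_plus _ _ _ _ (CV_plus _ _ _ _ (cv_const d) cv_inv)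
         (cv_scal _ _ (2 * (d + 2)) Hr)) (CV_mult _ _ _ _ Hr Hr)) as H1.
      replace (d + 0 + 2 * (d + 2) * 0 + 0 * 0) with d in H1 by ring. exact H1. }
  intros u Hu.
  apply (small_t _ (/2 * inner (vsub u p) (vsub u p))); [pose proof (inner_pos (vsub u p)); lra|].
  intros t Ht.
  assert (Hv := Hd1 _ (Hcv _ _ t Hu HCp Ht)).
  replace (vsub x (vadd (vscal t u) (vscal (1 - t) p))) with (vsub (vsub x p) (vscal t (vsub u p))) in Hv by vsolve.
  rewrite nsq_sub in Hv. iexp_in Hv.
  assert (Hw : 2 * t * inner (vsub x p) (vsub u p) <= t * t * inner (vsub u p) (vsub u p)).
  { iexp. iexp_in Hxp. lra. }
  iexp. iexp_in Hw. apply Rmult_le_reg_l with (2 * t); [lra|]. nra.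
Qed.

Lemma proj_subspace (hc : complete E) (C : E -> Prop) y : C vzero -> cl_set C ->
  (forall u v, C u -> C v -> C (vadd u v)) -> (forall a u, C u -> C (vscal a u)) ->
  exists p, C p /\ forall k, C k -> inner (vsub y p) k = 0.
Proof.
  intros H0 Hcl Hadd Hsc.
  assert (Hcv : cvx_set C) by (intros u v t Hu Hv _; apply Hadd; apply Hsc; auto).
  destruct (projection hc C vzero y H0 Hcv Hcl) as [p [Hp HVI]].
  exists p; split; auto. intros k Hk.
  pose proof (HVI (vadd p k) (Hadd _ _ Hp Hk)) as H1.
  pose proof (HVI (vadd p (vscal (-1) k)) (Hadd _ _ Hp (Hsc _ _ Hk))) as H2.
  replace (vsub (vadd p k) p) with k in H1 by vsolve.
  replace (vsub (vadd p (vscal (-1) k)) p) with (vscal (-1) k) in H2 by vsolve.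
  iexp_in H2. iexp_in H1. iexp. lra.
Qed.

Lemma riesz (hc : complete E) (phi : E -> R) M :
  (forall u v, phi (vadd u v) = phi u + phi v) -> (forall a u, phi (vscal a u) = a * phi u) ->
  (forall u, Rabs (phi u) <= M * norm u) ->
  exists xb, forall y, phi y = inner xb y.
Proof.
  intros Hadd Hsc Hb.
  assert (Hz : phi vzero = 0).
  { replace (@vzero E) with (vscal 0 (@vzero E)) by vsolve. rewrite Hsc; ring. }
  assert (Hsub : forall u v, phi (vsub u v) = phi u - phi v).
  { intros u v. replace (vsub u v) with (vadd u (vscal (-1) v)) by vsolve. rewrite Hadd, Hsc; ring. }
  destruct (classic (exists y0, phi y0 <> 0)) as [[y0 Hy0]|Hn].
  2:{ exists vzero. intro y. rewrite inner_zero_l. apply NNPP; intro; apply Hn; exists y; auto. }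
  set (K := fun u => phi u = 0).
  assert (Hcl : cl_set K).
  { intros s y Hs HK. unfold K in *.
    assert (Ha : Rabs (phi y) <= 0).
    { apply (le_lim (fun n => M * norm (vsub (s n) y)) 0 _ 0); [intros n _; clear Hs|].
      - rewrite norm_sub_sym.
        replace (phi y) with (phi (vsub y (s n))). apply Hb.
        rewrite Hsub, HK; ring.
      - rewrite <- (Rmult_0_r M). apply cv_scal. exact Hs. }
    pose proof (Rle_abs (phi y)). pose proof (Rle_abs (- phi y)). rewrite Rabs_Ropp in *. lra. }
  assert (HK0 : K vzero) by exact Hz.
  destruct (proj_subspace hc K y0 HK0 Hcl) as [p [Hp Hort]].
  { intros u v Hu Hv; unfold K in *; rewrite Hadd, Hu, Hv; ring. }
  { intros a u Hu; unfold K in *; rewrite Hsc, Hu; ring. }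
  set (w := vsub y0 p).
  assert (Hw : phi w = phi y0) by (unfold w; rewrite Hsub; unfold K in Hp; rewrite Hp; ring).
  assert (Hww : inner w w <> 0).
  { intro H. apply inner_def in H. rewrite H, Hz in Hw. auto. }
  exists (vscal (phi w / inner w w) w). intro y.
  assert (Hk : K (vsub y (vscal (phi y / phi w) w))).
  { unfold K. rewrite Hsub, Hsc. field. rewrite Hw; auto. }
  specialize (Hort _ Hk). fold w in Hort. iexp_in Hort. iexp.
  rewrite (inner_sym w y) in Hort.
  assert (Hwy : inner y w = phi y / phi w * inner w w) by lra.
  rewrite (inner_sym w y), Hwy. field. rewrite Hw; auto.
Qed.
End Proj.


Lemma ext_exists (v : nat -> R) : exists phi, sincr phi /\
  ((exists B, forall n, Rabs (v n) <= B) -> exists l, Un_cv (fun k => v (phi k)) l).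
Proof.
  destruct (classic (exists B, forall n, Rabs (v n) <= B)) as [[B HB]|Hn].
  - destruct (BW_extract v B HB) as [phi [l [H1 H2]]]. exists phi; split; auto. intros _; exists l; auto.
  - exists (fun k => k). split; [intro; lia|]. intro H; contradiction.
Qed.

Definition ext (v : nat -> R) : nat -> nat := proj1_sig (constructive_indefinite_description _ (ext_exists v)).

Lemma ext_spec v : sincr (ext v) /\
  ((exists B, forall n, Rabs (v n) <= B) -> exists l, Un_cv (fun k => v (ext v k)) l).
Proof. unfold ext; destruct (constructive_indefinite_description _ (ext_exists v)); auto. Qed.

Lemma cv_shift_n (w : nat -> R) N l : Un_cv (fun k => w (k + N)%nat) l -> Un_cv w l.
Proof.
  intros H e He. destruct (H e He) as [K HK]. exists (K + N)%nat. intros n Hn.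
  replace n with ((n - N) + N)%nat by lia. apply HK; lia.
Qed.

Section WC.
Context {E : IPS} (hc : complete E) (u : nat -> E) (M : R) (HM : forall n, norm (u n) <= M).

Fixpoint Phi (j : nat) : nat -> nat :=
  match j with
  | 0%nat => fun k => k
  | S j => fun k => Phi j (ext (fun i => inner (u (Phi j i)) (u j)) k)
  end.

Lemma Phi_sincr j : sincr (Phi j).
Proof.
  induction j; simpl; [intro; lia|].
  apply (sincr_comp (Phi j) (ext _)); auto. apply ext_spec.
Qed.

Lemma Phi_tail i j k : exists t, (k <= t)%nat /\ Phi (i + j) k = Phi j t.
Proof.
  revert k; induction i; intro k; [exists k; simpl; split; auto|].
  simpl. destruct (IHi (ext (fun i0 => inner (u (Phi (i + j) i0)) (u (i + j)%nat)) k)) as [t [Ht1 Ht2]].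
  exists t; split; auto.
  pose proof (sincr_ge _ (proj1 (ext_spec (fun i0 => inner (u (Phi (i + j) i0)) (u (i + j)%nat)))) k). lia.
Qed.

Definition psi k := Phi k k.

Lemma psi_sincr : sincr psi.
Proof.
  intro k. unfold psi. simpl.
  set (v := fun i => inner (u (Phi k i)) (u k)).
  pose proof (sincr_ge _ (proj1 (ext_spec v)) (S k)).
  pose proof (sincr_mono _ (Phi_sincr k) _ _ H). pose proof (Phi_sincr k k). lia.
Qed.

Lemma M_pos : 0 <= M.
Proof. pose proof (HM 0%nat); pose proof (norm_pos (u 0%nat)); lra. Qed.

Lemma inner_u_bound n y : Rabs (inner (u n) y) <= M * norm y.
Proof. eapply Rle_trans; [apply CS|]. apply Rmult_le_compat_r; [apply norm_pos|auto]. Qed.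

Lemma psi_cv_um m : exists l, Un_cv (fun k => inner (u (psi k)) (u m)) l.
Proof.
  assert (Hs : forall k, exists t, (k <= t)%nat /\ psi (k + S m)%nat = Phi (S m) t).
  { intro k. unfold psi. destruct (Phi_tail k (S m) (k + S m)) as [t [H1 H2]].
    exists t; split; [lia|auto]. }
  set (sig := fun k => proj1_sig (constructive_indefinite_description _ (Hs k))).
  assert (Hsig : forall k, (k <= sig k)%nat /\ psi (k + S m)%nat = Phi (S m) (sig k)).
  { intro k; unfold sig; destruct (constructive_indefinite_description _ (Hs k)); auto. }
  set (v := fun i => inner (u (Phi m i)) (u m)).
  destruct (proj2 (ext_spec v)) as [l Hl].
  { exists (M * M). intro n. unfold v. eapply Rle_trans; [apply inner_u_bound|].
    apply Rmult_le_compat_l; [apply M_pos|auto]. }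
  exists l. apply (cv_shift_n _ (S m)).
  apply (cv_ext (fun k => v (ext v (sig k)))).
  - intro k. destruct (Hsig k) as [_ H]. rewrite H. reflexivity.
  - apply (cv_sub_index (fun i => v (ext v i))); auto. intro k; apply Hsig.
Qed.

Inductive inspan : E -> Prop :=
  | isp0 : inspan vzero
  | ispS : forall a m s, inspan s -> inspan (vadd (vscal a (u m)) s).

Lemma inspan_add s1 s2 : inspan s1 -> inspan s2 -> inspan (vadd s1 s2).
Proof.
  intros H1 H2; induction H1.
  - rewrite vadd_0_l; auto.
  - replace (vadd (vadd (vscal a (u m)) s) s2) with (vadd (vscal a (u m)) (vadd s s2)) by vsolve.
    constructor; auto.
Qed.

Lemma inspan_scal c s : inspan s -> inspan (vscal c s).
Proof.
  intros H; induction H.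
  - replace (vscal c (@vzero E)) with (@vzero E) by vsolve. constructor.
  - replace (vscal c (vadd (vscal a (u m)) s)) with (vadd (vscal (c * a) (u m)) (vscal c s)) by vsolve.
    constructor; auto.
Qed.

Lemma inspan_cv s : inspan s -> exists l, Un_cv (fun k => inner (u (psi k)) s) l.
Proof.
  intro H; induction H.
  - exists 0. apply (cv_ext (fun _ => 0)); [intro; rewrite inner_zero_r; auto|apply cv_const].
  - destruct IHinspan as [l Hl]. destruct (psi_cv_um m) as [l' Hl'].
    exists (a * l' + l).
    apply (cv_ext (fun k => a * inner (u (psi k)) (u m) + inner (u (psi k)) s)); [intro; iexp; ring|].
    apply CV_plus; auto. apply cv_scal; auto.
Qed.

Definition Vs y := forall e, 0 < e -> exists s, inspan s /\ norm (vsub y s) < e.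

Lemma Vs_inspan s : inspan s -> Vs s.
Proof. intros H e He; exists s; split; auto. replace (vsub s s) with (@vzero E) by vsolve. rewrite norm_zero; auto. Qed.

Lemma Vs_closed : cl_set Vs.
Proof.
  intros s y Hs HV e He. destruct (Hs (e / 2) ltac:(lra)) as [N HN].
  specialize (HN N (le_n _)). unfold R_dist in HN. rewrite Rminus_0_r, Rabs_pos_eq in HN by apply norm_pos.
  destruct (HV N (e / 2) ltac:(lra)) as [t [Ht1 Ht2]]. exists t; split; auto.
  pose proof (norm_sub3 y (s N) t). rewrite norm_sub_sym in HN. lra.
Qed.

Lemma Vs_add y1 y2 : Vs y1 -> Vs y2 -> Vs (vadd y1 y2).
Proof.
  intros H1 H2 e He. destruct (H1 (e/2) ltac:(lra)) as [s1 [Hs1 Hn1]]. destruct (H2 (e/2) ltac:(lra)) as [s2 [Hs2 Hn2]].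
  exists (vadd s1 s2); split; [apply inspan_add; auto|].
  replace (vsub (vadd y1 y2) (vadd s1 s2)) with (vadd (vsub y1 s1) (vsub y2 s2)) by vsolve.
  pose proof (norm_triangle (vsub y1 s1) (vsub y2 s2)). lra.
Qed.

Lemma Vs_scal c y : Vs y -> Vs (vscal c y).
Proof.
  intros H e He.
  assert (Hc : 0 < Rabs c + 1) by (pose proof (Rabs_pos c); lra).
  destruct (H (e / (Rabs c + 1))) as [s [Hs Hn]]; [apply Rdiv_lt_0_compat; lra|].
  exists (vscal c s); split; [apply inspan_scal; auto|].
  replace (vsub (vscal c y) (vscal c s)) with (vscal c (vsub y s)) by vsolve.
  rewrite norm_scal. pose proof (Rabs_pos c). pose proof (norm_pos (vsub y s)).
  apply Rle_lt_trans with ((Rabs c + 1) * norm (vsub y s)); [nra|].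
  apply Rmult_lt_reg_l with (/ (Rabs c + 1)); [apply Rinv_0_lt_compat; lra|].
  replace (/ (Rabs c + 1) * ((Rabs c + 1) * norm (vsub y s))) with (norm (vsub y s)) by (field; lra).
  replace (/ (Rabs c + 1) * e) with (e / (Rabs c + 1)) by (field; lra). auto.
Qed.

Lemma Vs_cv y : Vs y -> exists l, Un_cv (fun k => inner (u (psi k)) y) l.
Proof.
  intro HV. cut (Cauchy_crit (fun k => inner (u (psi k)) y)).
  { intro H; destruct (R_complete _ H) as [l Hl]; exists l; auto. }
  intros e He.
  assert (HM1 : 0 < 4 * (M + 1)) by (pose proof M_pos; lra).
  destruct (HV (e / (4 * (M + 1)))) as [s [Hs Hn]]; [apply Rdiv_lt_0_compat; lra|].
  destruct (inspan_cv s Hs) as [l Hl]. destruct (Hl (e / 4) ltac:(lra)) as [N HN].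
  exists N. intros n m Hn' Hm'. unfold R_dist in *.
  specialize (HN n Hn') as HNn. specialize (HN m Hm') as HNm.
  assert (Hb : forall k, Rabs (inner (u k) (vsub y s)) <= M * (e / (4 * (M + 1)))).
  { intro k. eapply Rle_trans; [apply inner_u_bound|]. apply Rmult_le_compat_l; [apply M_pos|lra]. }
  assert (Hme : M * (e / (4 * (M + 1))) <= e / 4).
  { apply Rmult_le_reg_r with (4 * (M + 1)); [lra|].
    replace (M * (e / (4 * (M + 1))) * (4 * (M + 1))) with (M * e) by (field; lra).
    pose proof M_pos. nra. }
  pose proof (Hb (psi n)) as Hbn. pose proof (Hb (psi m)) as Hbm.
  iexp_in Hbn. iexp_in Hbm.
  revert HNn HNm Hbn Hbm. unfold Rabs; repeat destruct Rcase_abs; intros; lra.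
Qed.

Lemma psi_cv y : exists l, Un_cv (fun k => inner (u (psi k)) y) l.
Proof.
  destruct (proj_subspace hc Vs y) as [p [Hp Hort]].
  - apply Vs_inspan; constructor.
  - apply Vs_closed.
  - apply Vs_add.
  - apply Vs_scal.
  - destruct (Vs_cv p Hp) as [l Hl]. exists l.
    apply (cv_ext (fun k => inner (u (psi k)) p)); auto.
    intro k. assert (Hk : Vs (u (psi k))).
    { apply Vs_inspan. replace (u (psi k)) with (vadd (vscal 1 (u (psi k))) vzero) by vsolve. repeat constructor. }
    specialize (Hort _ Hk). iexp_in Hort. rewrite (inner_sym y), (inner_sym p) in Hort. lra.
Qed.

Definition Lf y := proj1_sig (constructive_indefinite_description _ (psi_cv y)).
Lemma Lf_spec y : Un_cv (fun k => inner (u (psi k)) y) (Lf y).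
Proof. unfold Lf; destruct (constructive_indefinite_description _ (psi_cv y)); auto. Qed.

Lemma weak_compact : exists phi xb, sincr phi /\ weak_cv (fun k => u (phi k)) xb.
Proof.
  destruct (riesz hc Lf M) as [xb Hxb].
  - intros y1 y2. apply (UL_sequence (fun k => inner (u (psi k)) (vadd y1 y2))); [apply Lf_spec|].
    apply (cv_ext (fun k => inner (u (psi k)) y1 + inner (u (psi k)) y2)); [intro; iexp; ring|].
    apply CV_plus; apply Lf_spec.
  - intros a y. apply (UL_sequence (fun k => inner (u (psi k)) (vscal a y))); [apply Lf_spec|].
    apply (cv_ext (fun k => a * inner (u (psi k)) y)); [intro; iexp; ring|].
    apply cv_scal; apply Lf_spec.
  - intro y. apply Rabs_le. split.
    + apply (le_lim (fun k => inner (u (psi k)) y) (Lf y) _ 0); [|apply Lf_spec].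
      intros n _. pose proof (inner_u_bound (psi n) y). pose proof (Rle_abs (- inner (u (psi n)) y)).
      rewrite Rabs_Ropp in *. lra.
    + apply (lim_le (fun k => inner (u (psi k)) y) (Lf y) _ 0); [|apply Lf_spec].
      intros n _. pose proof (inner_u_bound (psi n) y). pose proof (Rle_abs (inner (u (psi n)) y)). lra.
  - exists psi, xb. split; [apply psi_sincr|]. intro y. rewrite <- Hxb. apply Lf_spec.
Qed.
End WC.


Section Cvx.
Context {E : IPS}.
Implicit Types x y z u v w : E.

Lemma subdiff_mono (f : E -> ereal) x y u v : subdiff f x u -> subdiff f y v ->
  0 <= inner (vsub u v) (vsub x y).
Proof.
  intros [Hx1 Hx2] [Hy1 Hy2]. specialize (Hx2 y). specialize (Hy2 x).
  destruct (f x) as [fx|]; [|congruence]. destruct (f y) as [fy|]; [|congruence].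
  simpl in *. iexp_in Hx2. iexp_in Hy2. iexp. rewrite (inner_sym x u), (inner_sym y u), (inner_sym x v), (inner_sym y v) in *. lra.
Qed.

Lemma prox_subdiff (f : E -> ereal) g y p : 0 < g -> proper f -> convex_fun f ->
  is_prox g f y p -> subdiff f p (vscal (/ g) (vsub y p)).
Proof.
  intros Hg [x0 Hx0] Hcv Hp.
  assert (Hfp : f p <> PInf).
  { intro H. specialize (Hp x0). rewrite H in Hp. destruct (f x0); simpl in Hp; [contradiction|congruence]. }
  split; auto. intro w.
  destruct (f p) as [fp|] eqn:Efp; [|congruence].
  destruct (f w) as [fw|] eqn:Efw; [|simpl; auto].
  simpl.
  set (I := inner (vsub y p) (vsub w p)). set (B := inner (vsub w p) (vsub w p)).
  assert (HB : 0 <= B) by apply inner_pos.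
  assert (Key : forall t, 0 < t < 1 -> g * fp + I <= g * fw + t * B / 2).
  { intros t Ht. specialize (Hcv w p t Ht). rewrite Efw, Efp in Hcv. simpl in Hcv.
    specialize (Hp (vadd (vscal t w) (vscal (1 - t) p))).
    destruct (f (vadd (vscal t w) (vscal (1 - t) p))) as [fq|]; [|contradiction].
    rewrite Efp in Hp. simpl in Hp, Hcv.
    rewrite !Rmult_1_r, !nsq' in Hp.
    replace (vsub y (vadd (vscal t w) (vscal (1 - t) p))) with (vsub (vsub y p) (vscal t (vsub w p))) in Hp by vsolve.
    rewrite (nsq_sub (vsub y p)) in Hp. rewrite ?inner_scal_r, ?inner_scal_l, ?inner_scal_r in Hp. fold I B in Hp.
    assert (H1 : g * t * fp + t * I <= g * t * fw + t * t * B / 2) by nra.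
    apply Rmult_le_reg_l with t; [lra|]. nra. }
  assert (Hmain : g * fp + I <= g * fw).
  { assert (g * fp + I - g * fw <= 0); [|lra].
    apply (small_t _ (B / 2)); [lra|]. intros t Ht; specialize (Key t Ht); lra. }
  rewrite inner_scal_r, inner_sym. fold I.
  apply Rmult_le_reg_l with g; [lra|].
  replace (g * (fp + / g * I)) with (g * fp + I) by (field; lra). lra.
Qed.

Lemma weak_lsc (hc : complete E) (f : E -> ereal) (s : nat -> E) xb c (d : nat -> R) :
  convex_fun f -> lsc f -> weak_cv s xb -> Un_cv d 0 ->
  (forall k, ele (f (s k)) (Fin (c + d k))) -> ele (f xb) (Fin c).
Proof.
  intros Hcv Hlsc Hw Hd Hs.
  assert (Hrho : forall rho, c < rho -> ele (f xb) (Fin rho)).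
  { intros rho Hr. set (C := fun v => ele (f v) (Fin rho)).
    destruct (Hd (rho - c) ltac:(lra)) as [N HN].
    assert (HC : forall k, (N <= k)%nat -> C (s k)).
    { intros k Hk. specialize (HN k Hk). unfold R_dist in HN. rewrite Rminus_0_r in HN.
      pose proof (Rle_abs (d k)). specialize (Hs k). unfold C.
      destruct (f (s k)); simpl in *; [lra|auto]. }
    assert (Hcvx : cvx_set C).
    { intros a b t Ha Hb Ht. unfold C in *. specialize (Hcv a b t Ht).
      destruct (f a) as [fa|]; [|contradiction]. destruct (f b) as [fb|]; [|contradiction].
      destruct (f (vadd (vscal t a) (vscal (1 - t) b))); simpl in *; [nra|auto]. }
    destruct (projection hc C (s N) xb (HC N (le_n _)) Hcvx (Hlsc rho)) as [p [Hp HVI]].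
    assert (Hle : inner (vsub xb p) (vsub xb p) <= 0).
    { apply (lim_le (fun k => inner (vsub (s k) p) (vsub xb p)) _ _ N).
      - intros k Hk. rewrite inner_sym. apply HVI, HC; auto.
      - apply (cv_ext (fun k => inner (s k) (vsub xb p) - inner p (vsub xb p))); [intro; rewrite inner_sub_l; auto|].
        rewrite inner_sub_l. apply CV_minus; [apply Hw|apply cv_const]. }
    pose proof (inner_pos (vsub xb p)).
    assert (Hx : xb = p) by (apply vsub_eq0, inner_def; lra). subst; auto. }
  destruct (f xb) as [fx|] eqn:Ef.
  - simpl. destruct (Rle_lt_dec fx c); auto.
    specialize (Hrho ((fx + c) / 2) ltac:(lra)). simpl in Hrho. lra.
  - specialize (Hrho (c + 1) ltac:(lra)). simpl in Hrho. auto.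
Qed.

Lemma eps_le a b c : 0 <= c -> (forall e, 0 < e -> a <= b + e * c) -> a <= b.
Proof.
  intros Hc H. assert (a - b <= 0); [|lra].
  apply (small_t _ c); auto. intros t Ht; specialize (H t ltac:(lra)); lra.
Qed.

Lemma grad_ineq (h : E -> R) (g0 x : E) : convex_real h ->
  (forall e, 0 < e -> exists dl, 0 < dl /\ forall d, norm d < dl -> Rabs (h (vadd x d) - h x - inner g0 d) <= e * norm d) ->
  forall y, h x + inner g0 (vsub y x) <= h y.
Proof.
  intros Hc Hd y. set (d := vsub y x).
  assert (inner g0 d <= h y - h x); [|lra].
  apply (eps_le _ _ (norm d)); [apply norm_pos|]. intros e He.
  destruct (Hd e He) as [dl [Hdl Hdd]].
  set (t := Rmin (1/2) (dl / (2 * (norm d + 1)))).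
  assert (Hnd : 0 <= norm d) by apply norm_pos.
  assert (Ht0 : 0 < t) by (unfold t; apply Rmin_glb_lt; [lra|apply Rdiv_lt_0_compat; lra]).
  assert (Ht1 : t <= 1/2) by apply Rmin_l.
  assert (Ht2 : t <= dl / (2 * (norm d + 1))) by apply Rmin_r.
  assert (Hn : norm (vscal t d) < dl).
  { rewrite norm_scal, Rabs_pos_eq by lra.
    apply Rle_lt_trans with (dl / (2 * (norm d + 1)) * norm d); [apply Rmult_le_compat_r; lra|].
    apply Rmult_lt_reg_r with (2 * (norm d + 1)); [lra|].
    replace (dl / (2 * (norm d + 1)) * norm d * (2 * (norm d + 1))) with (dl * norm d) by (field; lra). nra. }
  specialize (Hdd _ Hn). rewrite norm_scal, (Rabs_pos_eq t) in Hdd by lra.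
  specialize (Hc y x t ltac:(lra)).
  replace (vadd (vscal t y) (vscal (1 - t) x)) with (vadd x (vscal t d)) in Hc by (unfold d; vsolve).
  rewrite inner_scal_r in Hdd.
  assert (Hr := Rle_abs (- (h (vadd x (vscal t d)) - h x - t * inner g0 d))). rewrite Rabs_Ropp in Hr.
  assert (t * inner g0 d <= t * (h y - h x + e * norm d)) by nra.
  apply Rmult_le_reg_l with t; lra.
Qed.

Lemma weak_cv_subseq (s : nat -> E) xb phi : sincr phi -> weak_cv s xb -> weak_cv (fun k => s (phi k)) xb.
Proof. intros Hp Hw y. apply (cv_subseq (fun n => inner (s n) y)); auto. Qed.

Lemma weak_cv_close (s t : nat -> E) xb : weak_cv s xb -> Un_cv (fun n => norm (vsub (t n) (s n))) 0 -> weak_cv t xb.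
Proof.
  intros Hw Hn y.
  apply (cv_ext (fun n => inner (s n) y + inner (vsub (t n) (s n)) y)); [intro; iexp; ring|].
  rewrite <- (Rplus_0_r (inner xb y)). apply CV_plus; [apply Hw|].
  apply (cv0_le _ (fun n => norm (vsub (t n) (s n)) * norm y) 0); [intros; apply CS|].
  rewrite <- (Rmult_0_l (norm y)). apply CV_mult; [auto|apply cv_const].
Qed.

End Cvx.


Lemma extract_sub (Q : nat -> Prop) : (forall N, exists n, (N <= n)%nat /\ Q n) ->
  exists psi, sincr psi /\ forall k, Q (psi k).
Proof.
  intro H. set (sel := fun N => proj1_sig (constructive_indefinite_description _ (H N))).
  assert (Hs : forall N, (N <= sel N)%nat /\ Q (sel N)).
  { intro N; unfold sel; destruct (constructive_indefinite_description _ (H N)); auto. }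
  set (psi := fix psi k := match k with 0%nat => sel 0%nat | S k => sel (S (psi k)) end).
  exists psi; split.
  - intro k; simpl; destruct (Hs (S (psi k))); lia.
  - intro k; destruct k; simpl; apply Hs.
Qed.

Lemma sq_cv0 (r : nat -> R) : (forall n, 0 <= r n) -> Un_cv (fun n => r n * r n) 0 -> Un_cv r 0.
Proof.
  intros Hp H e He. destruct (H (e * e) ltac:(nra)) as [N HN]. exists N. intros n Hn.
  specialize (HN n Hn). specialize (Hp n). unfold R_dist in *. rewrite Rminus_0_r in *.
  rewrite Rabs_pos_eq in * by nra. nra.
Qed.

Lemma tseng_identity {E : IPS} (x r x2 z : E) :
  inner (vsub x2 z) (vsub x2 z) = inner (vsub x z) (vsub x z) - inner (vsub x r) (vsub x r)
   + inner (vsub x2 r) (vsub x2 r) - 2 * inner (vsub x x2) (vsub r z).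
Proof.
  iexp. rewrite ?(inner_sym z x2), ?(inner_sym z x), ?(inner_sym r x), ?(inner_sym r x2), ?(inner_sym z r),
    ?(inner_sym x2 x). ring.
Qed.

Lemma real_step al e rho d g K0 : 0 <= al -> 0 <= e -> 0 <= rho -> 0 < d <= 1 -> 0 < g ->
  2 * g / d <= K0 ->
  al * al - d * rho * rho + 2 * g * e * (al + rho) <= (al + K0 * e) * (al + K0 * e) - d / 2 * rho * rho.
Proof.
  intros Ha He Hr Hd Hg HK.
  set (K := 2 * g / d).
  assert (HK1 : g <= K).
  { unfold K. apply Rmult_le_reg_r with d; [lra|]. replace (2 * g / d * d) with (2 * g) by (field; lra). nra. }
  assert (HK2 : 2 * g * g <= d * K * K).
  { unfold K. replace (d * (2 * g / d) * (2 * g / d)) with (4 * g * g / d) by (field; lra).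
    apply Rmult_le_reg_r with d; [lra|]. replace (4 * g * g / d * d) with (4 * g * g) by (field; lra). nra. }
  assert (Ham : 2 * g * e * rho <= d / 2 * rho * rho + 2 * g * g * e * e / d).
  { assert (0 <= d / 2 * ((rho - 2 * g * e / d) * (rho - 2 * g * e / d))).
    { apply Rmult_le_pos; [lra|]. apply Rle_0_sqr. }
    replace (d / 2 * ((rho - 2 * g * e / d) * (rho - 2 * g * e / d))) with
      (d / 2 * rho * rho - 2 * g * e * rho + 2 * g * g * e * e / d) in H by (field; lra). lra. }
  assert (Hq : 2 * g * g * e * e / d <= K * K * e * e).
  { apply Rmult_le_reg_r with d; [lra|]. replace (2 * g * g * e * e / d * d) with (2 * g * g * e * e) by (field; lra).
    nra. }
  assert (HKK : K <= K0) by exact HK. assert (0 <= K) by lra. clearbody K.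
  assert (H1 : 0 <= (K0 - g) * (al * e)) by (apply Rmult_le_pos; [lra| apply Rmult_le_pos; lra]).
  assert (H2 : 0 <= (K0 * K0 - K * K) * (e * e)) by (apply Rmult_le_pos; [nra| apply Rle_0_sqr]).
  nra.
Qed.


Section Main.
Context {E : IPS} (hc : complete E) (f : E -> ereal) (hfp : proper f) (hfc : convex_fun f) (hfl : lsc f)
  (B : E -> E) (chi : R) (hchi : 0 < chi)
  (HBl : forall x y, norm (vsub (B x) (B y)) <= chi * norm (vsub x y))
  (HBm : forall x y, 0 <= inner (vsub (B x) (B y)) (vsub x y))
  (eps : R) (heps : 0 < eps < 1 / (chi + 1))
  (gamma : nat -> R) (hgamma : forall n, eps <= gamma n <= (1 - eps) / chi)
  (a b c : nat -> E)
  (ha : summable (fun n => norm (a n))) (hb : summable (fun n => norm (b n))) (hc' : summable (fun n => norm (c n)))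
  (X P : nat -> E).

Definition Zer z := subdiff f z (vopp (B z)).
Definition Y n := vsub (X n) (vscal (gamma n) (vadd (B (X n)) (a n))).
Definition Q n := vsub (P n) (vscal (gamma n) (vadd (B (P n)) (c n))).
Definition Rp n := vsub (P n) (b n).
Definition U n := vscal (/ gamma n) (vsub (Y n) (Rp n)).
Definition X2 n := vadd (Rp n) (vscal (gamma n) (vsub (B (X n)) (B (Rp n)))).
Definition W n := vadd (U n) (B (Rp n)).
Definition K0 := 2 / (chi * eps).
Definition K1 := / chi + 2.
Definition er n := norm (a n) + norm (b n) + norm (c n).

Context (hz : exists z, Zer z)
  (hp : forall n, is_prox (gamma n) f (Y n) (Rp n))
  (hx : forall n, X (S n) = vadd (vsub (X n) (Y n)) (Q n)).

Lemma eps_lt1 : eps < 1.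
Proof.
  destruct heps as [H1 H2]. assert (1 / (chi + 1) < 1).
  { apply Rmult_lt_reg_r with (chi + 1); [lra|]. replace (1 / (chi + 1) * (chi + 1)) with 1 by (field; lra). lra. }
  lra.
Qed.

Lemma gamma_pos n : 0 < gamma n.
Proof. pose proof (hgamma n); lra. Qed.

Lemma gamma_chi n : gamma n * chi <= 1 - eps.
Proof.
  destruct (hgamma n) as [_ H]. apply Rmult_le_compat_r with (r := chi) in H; [|lra].
  replace ((1 - eps) / chi * chi) with (1 - eps) in H by (field; lra). lra.
Qed.

Lemma gamma_le n : gamma n <= / chi.
Proof.
  pose proof (gamma_chi n). pose proof heps. apply Rmult_le_reg_r with chi; [lra|].
  rewrite Rinv_l by lra. lra.
Qed.

Lemma U_sub n : subdiff f (Rp n) (U n).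
Proof. apply prox_subdiff; auto. apply gamma_pos. Qed.

Lemma er_pos n : 0 <= er n.
Proof. unfold er; pose proof (norm_pos (a n)); pose proof (norm_pos (b n)); pose proof (norm_pos (c n)); lra. Qed.

Lemma er_summable : summable er.
Proof. unfold er. apply summable_plus; [apply summable_plus|]; auto. Qed.

Lemma tseng1 z n : Zer z ->
  inner (vsub (X2 n) z) (vsub (X2 n) z) <= inner (vsub (X n) z) (vsub (X n) z)
    - (1 - gamma n * gamma n * chi * chi) * inner (vsub (X n) (Rp n)) (vsub (X n) (Rp n))
    + 2 * gamma n * norm (a n) * norm (vsub (Rp n) z).
Proof.
  intro Hz. pose proof (gamma_pos n) as Hg.
  pose proof (subdiff_mono f _ _ _ _ (U_sub n) Hz) as H1.
  pose proof (HBm (Rp n) z) as H2.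
  assert (H3 : 0 <= inner (vsub (vsub (X n) (X2 n)) (vscal (gamma n) (a n))) (vsub (Rp n) z)).
  { replace (vsub (vsub (X n) (X2 n)) (vscal (gamma n) (a n)))
      with (vscal (gamma n) (vadd (vsub (U n) (vopp (B z))) (vsub (B (Rp n)) (B z)))).
    - rewrite inner_scal_l, inner_add_l. apply Rmult_le_pos; lra.
    - unfold U, X2, Y. apply vext; intro w; iexp. field. lra. }
  rewrite (tseng_identity (X n) (Rp n) (X2 n) z).
  assert (H4 : inner (vsub (X2 n) (Rp n)) (vsub (X2 n) (Rp n)) <=
     gamma n * gamma n * chi * chi * inner (vsub (X n) (Rp n)) (vsub (X n) (Rp n))).
  { replace (vsub (X2 n) (Rp n)) with (vscal (gamma n) (vsub (B (X n)) (B (Rp n)))) by (unfold X2; vsolve).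
    rewrite <- !nsq'. rewrite norm_scal, Rabs_pos_eq by lra.
    pose proof (HBl (X n) (Rp n)). pose proof (norm_pos (vsub (B (X n)) (B (Rp n)))).
    pose proof (norm_pos (vsub (X n) (Rp n))).
    assert (norm (vsub (B (X n)) (B (Rp n))) * norm (vsub (B (X n)) (B (Rp n))) <=
      chi * norm (vsub (X n) (Rp n)) * (chi * norm (vsub (X n) (Rp n)))) by (apply Rmult_le_compat; auto).
    nra. }
  assert (H5 : - inner (vscal (gamma n) (a n)) (vsub (Rp n) z) <= gamma n * norm (a n) * norm (vsub (Rp n) z)).
  { rewrite inner_scal_l. pose proof (CS (a n) (vsub (Rp n) z)).
    pose proof (Rle_abs (- inner (a n) (vsub (Rp n) z))). rewrite Rabs_Ropp in *. nra. }
  rewrite inner_sub_l in H3. lra.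
Qed.

Lemma K0_pos : 0 < K0.
Proof. unfold K0. pose proof heps. apply Rdiv_lt_0_compat; [lra|]. nra. Qed.

Lemma tseng2 z n : Zer z ->
  inner (vsub (X2 n) z) (vsub (X2 n) z) <= (norm (vsub (X n) z) + K0 * norm (a n)) * (norm (vsub (X n) z) + K0 * norm (a n))
    - eps / 2 * (norm (vsub (X n) (Rp n)) * norm (vsub (X n) (Rp n))).
Proof.
  intro Hz. pose proof (tseng1 z n Hz) as H1.
  pose proof (gamma_pos n) as Hg. pose proof (gamma_chi n) as Hgc. pose proof (gamma_le n) as Hgl.
  pose proof eps_lt1 as He1. pose proof heps as He.
  set (d := 1 - gamma n * gamma n * chi * chi).
  assert (Hd1 : eps <= d).
  { unfold d. assert (0 <= gamma n * chi) by nra. nra. }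
  assert (Hd2 : d <= 1) by (unfold d; nra).
  assert (HK : 2 * gamma n / d <= K0).
  { unfold K0. apply Rmult_le_reg_r with d; [lra|].
    replace (2 * gamma n / d * d) with (2 * gamma n) by (field; lra).
    replace (2 / (chi * eps) * d) with (2 / chi * (d / eps)) by (field; lra).
    assert (1 <= d / eps).
    { apply Rmult_le_reg_r with eps; [lra|]. replace (d / eps * eps) with d by (field; lra). lra. }
    assert (0 < / chi) by (apply Rinv_0_lt_compat; lra).
    assert (2 / chi * 1 <= 2 / chi * (d / eps)) by (apply Rmult_le_compat_l; [unfold Rdiv; lra|lra]).
    unfold Rdiv in *. lra. }
  pose proof (real_step (norm (vsub (X n) z)) (norm (a n)) (norm (vsub (X n) (Rp n))) d (gamma n) K0
    (norm_pos _) (norm_pos _) (norm_pos _) ltac:(lra) Hg HK) as H2.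
  rewrite <- !nsq' in H1. fold d in H1.
  pose proof (norm_sub3 (Rp n) (X n) z). rewrite (norm_sub_sym (Rp n) (X n)) in H.
  pose proof (norm_pos (a n)). pose proof (norm_pos (vsub (X n) (Rp n))).
  assert (2 * gamma n * norm (a n) * norm (vsub (Rp n) z) <=
          2 * gamma n * norm (a n) * (norm (vsub (X n) z) + norm (vsub (X n) (Rp n)))).
  { apply Rmult_le_compat_l; [|lra]. nra. }
  assert (eps / 2 * (norm (vsub (X n) (Rp n)) * norm (vsub (X n) (Rp n))) <=
    d / 2 * norm (vsub (X n) (Rp n)) * norm (vsub (X n) (Rp n))) by nra.
  rewrite <- nsq'. lra.
Qed.

Lemma step3 n : norm (vsub (X (S n)) (X2 n)) <= K1 * er n.
Proof.
  pose proof (gamma_pos n) as Hg. pose proof (gamma_chi n) as Hgc. pose proof (gamma_le n) as Hgl.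
  rewrite hx.
  replace (vsub (vadd (vsub (X n) (Y n)) (Q n)) (X2 n)) with
    (vadd (vadd (vscal (gamma n) (a n)) (b n)) (vopp (vadd (vscal (gamma n) (vsub (B (P n)) (B (Rp n)))) (vscal (gamma n) (c n)))))
    by (unfold Y, Q, X2, Rp; vsolve).
  eapply Rle_trans; [apply norm_triangle|]. rewrite norm_opp.
  eapply Rle_trans; [apply Rplus_le_compat; apply norm_triangle|].
  rewrite !norm_scal, !Rabs_pos_eq by lra.
  pose proof (HBl (P n) (Rp n)).
  replace (vsub (P n) (Rp n)) with (b n) in H by (unfold Rp; vsolve).
  pose proof (norm_pos (a n)). pose proof (norm_pos (b n)). pose proof (norm_pos (c n)).
  pose proof (norm_pos (vsub (B (P n)) (B (Rp n)))).
  assert (gamma n * norm (vsub (B (P n)) (B (Rp n))) <= norm (b n)).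
  { apply Rle_trans with (gamma n * (chi * norm (b n))); [apply Rmult_le_compat_l; lra|]. nra. }
  unfold K1, er.
  assert (0 < / chi) by (apply Rinv_0_lt_compat; lra).
  assert (gamma n * norm (a n) <= / chi * norm (a n)) by (apply Rmult_le_compat_r; lra).
  assert (gamma n * norm (c n) <= / chi * norm (c n)) by (apply Rmult_le_compat_r; lra).
  nra.
Qed.

Lemma fejer z n : Zer z -> norm (vsub (X (S n)) z) <= norm (vsub (X n) z) + (K0 + K1) * er n.
Proof.
  intro Hz. pose proof (tseng2 z n Hz) as H. pose proof K0_pos.
  assert (H1 : norm (vsub (X2 n) z) <= norm (vsub (X n) z) + K0 * norm (a n)).
  { apply norm_le_sq. pose proof (norm_pos (vsub (X n) z)). pose proof (norm_pos (a n)). nra.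
    pose proof (norm_pos (vsub (X n) (Rp n))). nra. }
  pose proof (norm_sub3 (X (S n)) (X2 n) z). pose proof (step3 n).
  assert (K0 * norm (a n) <= K0 * er n).
  { apply Rmult_le_compat_l; [lra|]. unfold er. pose proof (norm_pos (b n)); pose proof (norm_pos (c n)); lra. }
  lra.
Qed.

Lemma alpha_cv z : Zer z -> exists l, Un_cv (fun n => norm (vsub (X n) z)) l.
Proof.
  intro Hz. apply (quasi_fejer _ (fun n => (K0 + K1) * er n)).
  - intro; apply norm_pos.
  - intro n. apply Rmult_le_pos; [|apply er_pos]. pose proof K0_pos. unfold K1.
    assert (0 < / chi) by (apply Rinv_0_lt_compat; lra). lra.
  - apply summable_scal, er_summable.
  - intro n; apply fejer; auto.
Qed.

Lemma X2_bound z n : Zer z -> norm (vsub (X2 n) z) <= norm (vsub (X n) z) + K0 * er n.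
Proof.
  intro Hz. pose proof (tseng2 z n Hz) as H. pose proof K0_pos.
  assert (H1 : norm (vsub (X2 n) z) <= norm (vsub (X n) z) + K0 * norm (a n)).
  { apply norm_le_sq. pose proof (norm_pos (vsub (X n) z)). pose proof (norm_pos (a n)). nra.
    pose proof (norm_pos (vsub (X n) (Rp n))). nra. }
  assert (K0 * norm (a n) <= K0 * er n).
  { apply Rmult_le_compat_l; [lra|]. unfold er. pose proof (norm_pos (b n)); pose proof (norm_pos (c n)); lra. }
  lra.
Qed.

Lemma er_cv0 : Un_cv er 0.
Proof. apply summable_terms, er_summable. Qed.

Lemma rho_cv0 : Un_cv (fun n => norm (vsub (X n) (Rp n))) 0.
Proof.
  destruct hz as [z Hz]. destruct (alpha_cv z Hz) as [l Hl].
  set (al := fun n => norm (vsub (X n) z)). set (D := fun n => norm (vsub (X2 n) z)).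
  pose proof K0_pos. pose proof er_cv0 as Her.
  assert (HD : Un_cv D l).
  { apply (squeeze (fun n => al (S n) - K1 * er n) _ (fun n => al n + K0 * er n) l 0).
    - intros n _. split.
      + pose proof (norm_sub3 (X (S n)) (X2 n) z). pose proof (step3 n). unfold al, D. lra.
      + apply X2_bound; auto.
    - pose proof (CV_minus _ _ _ _ (cv_shift' _ _ Hl) (cv_scal _ _ K1 Her)) as H1.
      replace (l - K1 * 0) with l in H1 by ring. exact H1.
    - pose proof (CV_plus _ _ _ _ Hl (cv_scal _ _ K0 Her)) as H1.
      replace (l + K0 * 0) with l in H1 by ring. exact H1. }
  apply sq_cv0; [intro; apply norm_pos|].
  apply (squeeze (fun _ => 0) _ (fun n => 2 / eps * ((al n + K0 * er n) * (al n + K0 * er n) - D n * D n)) 0 0).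
  - intros n _. pose proof (tseng2 z n Hz) as H1. fold (al n) in H1.
    rewrite <- nsq' in H1. fold (D n) in H1. pose proof heps.
    assert (Hae : 0 <= al n + K0 * norm (a n) <= al n + K0 * er n).
    { pose proof (norm_pos (vsub (X n) z)). pose proof (norm_pos (a n)). unfold al. split; [nra|].
      apply Rplus_le_compat_l, Rmult_le_compat_l; [lra|]. unfold er.
      pose proof (norm_pos (b n)); pose proof (norm_pos (c n)); lra. }
    assert ((al n + K0 * norm (a n)) * (al n + K0 * norm (a n)) <= (al n + K0 * er n) * (al n + K0 * er n))
      by (apply Rmult_le_compat; lra).
    pose proof (norm_pos (vsub (X n) (Rp n))).
    split; [nra|].
    apply Rmult_le_reg_l with (eps / 2); [lra|].
    replace (eps / 2 * (2 / eps * ((al n + K0 * er n) * (al n + K0 * er n) - D n * D n))) with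
      ((al n + K0 * er n) * (al n + K0 * er n) - D n * D n) by (field; lra). lra.
  - apply cv_const.
  - assert (Hs : Un_cv (fun n => al n + K0 * er n) (l + K0 * 0)) by exact (CV_plus _ _ _ _ Hl (cv_scal _ _ K0 Her)).
    pose proof (cv_scal _ _ (2 / eps) (CV_minus _ _ _ _ (CV_mult _ _ _ _ Hs Hs) (CV_mult _ _ _ _ HD HD))) as H1.
    replace (2 / eps * ((l + K0 * 0) * (l + K0 * 0) - l * l)) with 0 in H1 by ring. exact H1.
Qed.

Lemma W_bound n : norm (W n) <= (/ eps + chi) * norm (vsub (X n) (Rp n)) + norm (a n).
Proof.
  pose proof (gamma_pos n) as Hg. pose proof (hgamma n) as Hge.
  replace (W n) with (vsub (vsub (vscal (/ gamma n) (vsub (X n) (Rp n))) (vsub (B (X n)) (B (Rp n)))) (a n)).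
  2:{ unfold W, U, Y. apply vext; intro w; iexp. field. lra. }
  eapply Rle_trans; [apply norm_sub_triangle|].
  eapply Rle_trans; [apply Rplus_le_compat_r, norm_sub_triangle|].
  rewrite norm_scal, Rabs_pos_eq by (left; apply Rinv_0_lt_compat; lra).
  pose proof (HBl (X n) (Rp n)). pose proof (norm_pos (vsub (X n) (Rp n))).
  assert (/ gamma n <= / eps) by (apply Rinv_le_contravar; lra).
  assert (/ gamma n * norm (vsub (X n) (Rp n)) <= / eps * norm (vsub (X n) (Rp n))) by (apply Rmult_le_compat_r; lra).
  lra.
Qed.

Lemma W_cv0 : Un_cv (fun n => norm (W n)) 0.
Proof.
  apply (cv0_le _ (fun n => (/ eps + chi) * norm (vsub (X n) (Rp n)) + norm (a n)) 0).
  - intros n _. rewrite Rabs_pos_eq by apply norm_pos. apply W_bound.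
  - replace 0 with ((/ eps + chi) * 0 + 0) by ring. apply CV_plus; [apply cv_scal, rho_cv0|].
    apply summable_terms; auto.
Qed.

Lemma X_bounded : exists M, forall n, norm (X n) <= M.
Proof.
  destruct hz as [z Hz]. destruct (alpha_cv z Hz) as [l Hl]. destruct (cv_bounded _ _ Hl) as [M HM].
  exists (M + norm z). intro n. specialize (HM n). rewrite Rabs_pos_eq in HM by apply norm_pos.
  replace (X n) with (vadd (vsub (X n) z) z) by vsolve. pose proof (norm_triangle (vsub (X n) z) z). lra.
Qed.

Lemma R_bounded : exists M, forall n, norm (Rp n) <= M.
Proof.
  destruct X_bounded as [M HM]. destruct (cv_bounded _ _ rho_cv0) as [M' HM'].
  exists (M + M'). intro n. specialize (HM n). specialize (HM' n). rewrite Rabs_pos_eq in HM' by apply norm_pos.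
  replace (Rp n) with (vsub (X n) (vsub (X n) (Rp n))) by vsolve.
  pose proof (norm_sub_triangle (X n) (vsub (X n) (Rp n))). lra.
Qed.

Lemma minty phi xb : sincr phi -> weak_cv (fun k => X (phi k)) xb ->
  forall y fy, f y = Fin fy -> ele (f xb) (Fin (fy + inner (vsub y xb) (B y))).
Proof.
  intros Hphi Hw y fy Hfy.
  assert (HwR : weak_cv (fun k => Rp (phi k)) xb).
  { apply (weak_cv_close (fun k => X (phi k))); auto.
    apply (cv_ext (fun k => norm (vsub (X (phi k)) (Rp (phi k))))); [intro; apply norm_sub_sym|].
    apply (cv_subseq (fun n => norm (vsub (X n) (Rp n)))); auto. apply rho_cv0. }
  destruct R_bounded as [MR HMR].
  apply (weak_lsc hc f (fun k => Rp (phi k)) xb _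
    (fun k => - inner (vsub y (Rp (phi k))) (W (phi k)) + inner (vsub xb (Rp (phi k))) (B y))); auto.
  - rewrite <- (Rplus_0_r 0) at 1. apply CV_plus.
    + apply (cv0_le _ (fun k => (norm y + MR) * norm (W (phi k))) 0).
      * intros k _. rewrite Rabs_Ropp. eapply Rle_trans; [apply CS|]. apply Rmult_le_compat_r; [apply norm_pos|].
        pose proof (norm_sub_triangle y (Rp (phi k))). specialize (HMR (phi k)). lra.
      * rewrite <- (Rmult_0_r (norm y + MR)). apply cv_scal.
        apply (cv_subseq (fun n => norm (W n))); auto. apply W_cv0.
    + apply (cv_ext (fun k => inner xb (B y) - inner (Rp (phi k)) (B y))); [intro; rewrite inner_sub_l; auto|].
      rewrite <- (Rminus_diag (inner xb (B y))). apply CV_minus; [apply cv_const|apply HwR].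
  - intro k. set (n := phi k).
    destruct (U_sub n) as [HfR HU]. specialize (HU y). rewrite Hfy in HU.
    destruct (f (Rp n)) as [fr|]; [|contradiction]. simpl in *.
    pose proof (HBm y (Rp n)) as Hm. rewrite inner_sym, inner_sub_r in Hm.
    unfold W. rewrite inner_add_r.
    assert (inner (vsub y xb) (B y) + inner (vsub xb (Rp n)) (B y) = inner (vsub y (Rp n)) (B y))
      by (rewrite !inner_sub_l; ring).
    lra.
Qed.

Lemma demi phi xb : sincr phi -> weak_cv (fun k => X (phi k)) xb -> Zer xb.
Proof.
  intros Hphi Hw. pose proof (minty phi xb Hphi Hw) as Hm.
  destruct hz as [z0 [Hz0 _]].
  destruct (f z0) as [fz0|] eqn:Ez0; [|contradiction].
  specialize (Hm z0 fz0 Ez0) as Hfx.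
  destruct (f xb) as [fx|] eqn:Efx; [|contradiction].
  unfold Zer, subdiff. rewrite Efx.
  split; [discriminate|].
  intro y. destruct (f y) as [fy|] eqn:Efy; [|simpl; auto]. simpl.
  rewrite inner_opp_r.
  assert (fx - fy - inner (vsub y xb) (B xb) <= 0); [|lra].
  apply (small_t _ (chi * inner (vsub y xb) (vsub y xb))); [apply Rmult_le_pos; [lra|apply inner_pos]|].
  intros t Ht. set (yt := vadd (vscal t y) (vscal (1 - t) xb)).
  pose proof (hfc y xb t Ht) as Hc. rewrite Efy, Efx in Hc. fold yt in Hc.
  destruct (f yt) as [fyt|] eqn:Efyt; [|contradiction]. simpl in Hc.
  specialize (Hm yt fyt Efyt). simpl in Hm.
  replace (vsub yt xb) with (vscal t (vsub y xb)) in Hm by (unfold yt; vsolve).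
  rewrite inner_scal_l in Hm.
  assert (HB1 : inner (vsub y xb) (B yt) <= inner (vsub y xb) (B xb) + t * chi * inner (vsub y xb) (vsub y xb)).
  { replace (inner (vsub y xb) (B yt)) with (inner (vsub y xb) (B xb) + inner (vsub y xb) (vsub (B yt) (B xb)))
      by (rewrite inner_sub_r; ring).
    pose proof (CS_le (vsub y xb) (vsub (B yt) (B xb))). pose proof (HBl yt xb).
    replace (vsub yt xb) with (vscal t (vsub y xb)) in H0 by (unfold yt; vsolve).
    rewrite norm_scal, Rabs_pos_eq in H0 by lra. rewrite <- nsq'.
    pose proof (norm_pos (vsub y xb)).
    assert (norm (vsub y xb) * norm (vsub (B yt) (B xb)) <= norm (vsub y xb) * (chi * (t * norm (vsub y xb))))
      by (apply Rmult_le_compat_l; auto). nra. }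
  assert (t * (fx - fy - inner (vsub y xb) (B xb)) <= t * (t * (chi * inner (vsub y xb) (vsub y xb)))) by nra.
  apply Rmult_le_reg_l with t; lra.
Qed.

Lemma opial phi psi x1 x2 : sincr phi -> sincr psi -> weak_cv (fun k => X (phi k)) x1 ->
  weak_cv (fun k => X (psi k)) x2 -> Zer x1 -> Zer x2 -> x1 = x2.
Proof.
  intros Hphi Hpsi Hw1 Hw2 Hz1 Hz2.
  destruct (alpha_cv x1 Hz1) as [l1 Hl1]. destruct (alpha_cv x2 Hz2) as [l2 Hl2].
  set (v := fun n => inner (X n) (vsub x1 x2)).
  set (lam := (l2 * l2 - l1 * l1 - inner x2 x2 + inner x1 x1) / 2).
  assert (Hv : Un_cv v lam).
  { apply (cv_ext (fun n => (norm (vsub (X n) x2) * norm (vsub (X n) x2) - norm (vsub (X n) x1) * norm (vsub (X n) x1)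
        - inner x2 x2 + inner x1 x1) / 2)).
    - intro n. rewrite !nsq'. unfold v. iexp. rewrite (inner_sym x1 (X n)), (inner_sym x2 (X n)). field.
    - unfold lam. unfold Rdiv. apply CV_mult; [|apply cv_const].
      apply CV_plus; [apply CV_minus; [apply CV_minus; apply CV_mult; auto|apply cv_const]|apply cv_const]. }
  assert (E1 : lam = inner x1 (vsub x1 x2)).
  { apply (UL_sequence (fun k => v (phi k))); [apply (cv_subseq v); auto|]. apply Hw1. }
  assert (E2 : lam = inner x2 (vsub x1 x2)).
  { apply (UL_sequence (fun k => v (psi k))); [apply (cv_subseq v); auto|]. apply Hw2. }
  apply vsub_eq0, inner_def. rewrite inner_sub_l. lra.
Qed.

Theorem main_abstract : exists xb, Zer xb /\ weak_cv X xb /\ weak_cv P xb.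
Proof.
  destruct X_bounded as [M HM].
  destruct (weak_compact hc X M HM) as [phi [xb [Hphi Hw]]].
  assert (Hz : Zer xb) by (apply (demi phi); auto).
  assert (HX : weak_cv X xb).
  { intro y. apply NNPP. intro Hn.
    assert (Hex : exists e, 0 < e /\ forall N, exists n, (N <= n)%nat /\ e <= Rabs (inner (X n) y - inner xb y)).
    { apply NNPP; intro Hn2. apply Hn. intros e He. apply NNPP; intro Hn3. apply Hn2. exists e; split; auto.
      intro N. apply NNPP; intro Hn4. apply Hn3. exists N. intros n Hn5. unfold R_dist.
      destruct (Rlt_le_dec (Rabs (inner (X n) y - inner xb y)) e); auto. exfalso; apply Hn4; exists n; split; auto. }
    destruct Hex as [e [He HN]].
    destruct (extract_sub _ HN) as [psi [Hpsi Hpsi2]].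
    destruct (weak_compact hc (fun k => X (psi k)) M (fun k => HM (psi k))) as [th [x2 [Hth Hw2]]].
    assert (Hst : sincr (fun k => psi (th k))) by (apply sincr_comp; auto).
    assert (Hz2 : Zer x2) by (apply (demi (fun k => psi (th k))); auto).
    assert (Hx2 : xb = x2) by (apply (opial phi (fun k => psi (th k))); auto).
    subst x2. specialize (Hw2 y). destruct (Hw2 e He) as [N HN2].
    specialize (HN2 N (le_n _)). specialize (Hpsi2 (th N)). unfold R_dist in HN2. lra. }
  exists xb; split; [auto|split; auto].
  apply (weak_cv_close X); auto.
  apply (cv0_le _ (fun n => norm (b n) + norm (vsub (X n) (Rp n))) 0).
  - intros n _. rewrite Rabs_pos_eq by apply norm_pos.
    replace (vsub (P n) (X n)) with (vsub (b n) (vsub (X n) (Rp n))) by (unfold Rp; vsolve).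
    apply norm_sub_triangle.
  - rewrite <- (Rplus_0_r 0). apply CV_plus; [apply summable_terms; auto|apply rho_cv0].
Qed.
End Main.


Section Prod.
Context {E F : IPS}.

Lemma norm_pair (a : E) (b : F) : @norm (prodIPS E F) (a, b) = sqrt (inner a a + inner b b).
Proof. reflexivity. Qed.
Lemma inner_pair (a c : E) (b d : F) : @inner (prodIPS E F) (a, b) (c, d) = inner a c + inner b d.
Proof. reflexivity. Qed.
Lemma vsub_pair (a c : E) (b d : F) : @vsub (prodIPS E F) (a, b) (c, d) = (vsub a c, vsub b d).
Proof. reflexivity. Qed.
Lemma vadd_pair (a c : E) (b d : F) : @vadd (prodIPS E F) (a, b) (c, d) = (vadd a c, vadd b d).
Proof. reflexivity. Qed.
Lemma vscal_pair t (a : E) (b : F) : @vscal (prodIPS E F) t (a, b) = (vscal t a, vscal t b).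
Proof. reflexivity. Qed.
Lemma vopp_pair (a : E) (b : F) : @vopp (prodIPS E F) (a, b) = (vopp a, vopp b).
Proof. reflexivity. Qed.

Lemma norm_fst_le (a : E) (b : F) : norm a <= @norm (prodIPS E F) (a, b).
Proof. rewrite norm_pair. unfold norm. apply sqrt_le_1_alt. pose proof (inner_pos b); lra. Qed.
Lemma norm_snd_le (a : E) (b : F) : norm b <= @norm (prodIPS E F) (a, b).
Proof. rewrite norm_pair. unfold norm. apply sqrt_le_1_alt. pose proof (inner_pos a); lra. Qed.
Lemma norm_pair_le (a : E) (b : F) : @norm (prodIPS E F) (a, b) <= norm a + norm b.
Proof.
  rewrite norm_pair. pose proof (norm_pos a). pose proof (norm_pos b).
  rewrite <- (sqrt_square (norm a + norm b)) by lra. apply sqrt_le_1_alt.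
  rewrite <- (nsq' a), <- (nsq' b). nra.
Qed.

Lemma prod_complete : complete E -> complete F -> complete (prodIPS E F).
Proof.
  intros H1 H2 u Hu.
  destruct (H1 (fun n => fst (u n))) as [l1 Hl1].
  { intros e He. destruct (Hu e He) as [N HN]. exists N. intros m n Hm Hn. specialize (HN m n Hm Hn).
    destruct (u m), (u n). cbn [fst snd]. rewrite vsub_pair in HN. eapply Rle_lt_trans; [apply norm_fst_le|]. exact HN. }
  destruct (H2 (fun n => snd (u n))) as [l2 Hl2].
  { intros e He. destruct (Hu e He) as [N HN]. exists N. intros m n Hm Hn. specialize (HN m n Hm Hn).
    destruct (u m), (u n). cbn [fst snd]. rewrite vsub_pair in HN. eapply Rle_lt_trans; [apply norm_snd_le|]. exact HN. }
  exists (l1, l2). unfold strong_cv.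
  apply (cv0_le _ (fun n => norm (vsub (fst (u n)) l1) + norm (vsub (snd (u n)) l2)) 0).
  - intros n _. rewrite Rabs_pos_eq by apply norm_pos. destruct (u n); cbn [fst snd]. rewrite vsub_pair. apply norm_pair_le.
  - rewrite <- (Rplus_0_r 0). apply CV_plus; auto.
Qed.

Lemma weak_fst (u : nat -> E) (v : nat -> F) l1 l2 : @weak_cv (prodIPS E F) (fun n => (u n, v n)) (l1, l2) -> weak_cv u l1.
Proof.
  intros H y. specialize (H (y, vzero)). simpl in H.
  apply (cv_ext (fun n => @inner (prodIPS E F) (u n, v n) (y, vzero))); [intro; rewrite inner_pair, inner_zero_r; ring|].
  replace (inner l1 y) with (@inner (prodIPS E F) (l1, l2) (y, vzero)) by (rewrite inner_pair, inner_zero_r; ring).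
  exact H.
Qed.

Lemma weak_snd (u : nat -> E) (v : nat -> F) l1 l2 : @weak_cv (prodIPS E F) (fun n => (u n, v n)) (l1, l2) -> weak_cv v l2.
Proof.
  intros H y. specialize (H (vzero, y)). simpl in H.
  apply (cv_ext (fun n => @inner (prodIPS E F) (u n, v n) (vzero, y))); [intro; rewrite inner_pair, inner_zero_r; ring|].
  replace (inner l2 y) with (@inner (prodIPS E F) (l1, l2) (vzero, y)) by (rewrite inner_pair, inner_zero_r; ring).
  exact H.
Qed.
End Prod.

Lemma summable_le (e e' : nat -> R) : (forall n, 0 <= e n <= e' n) -> summable e' -> summable e.
Proof.
  intros H [l Hl].
  assert (Hg : Un_growing (sum_f_R0 e)) by (intro n; simpl; specialize (H (S n)); lra).
  assert (Hb : forall n, sum_f_R0 e n <= l).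
  { intro n. apply Rle_trans with (sum_f_R0 e' n).
    - apply sum_Rle. intros; apply H.
    - apply growing_ineq; auto. intro k; simpl; specialize (H (S k)); lra. }
  destruct (growing_cv _ Hg) as [l' Hl'].
  - exists l. intros x [n ->]. apply Hb.
  - exists l'; auto.
Qed.

Lemma abs_summable_summable {E : IPS} (a : nat -> E) : abs_summable a -> summable (fun n => norm (a n)).
Proof. intros [l H]; exists l; auto. Qed.


Lemma inner_pair_r {E F : IPS} (p : prodIPS E F) (a : E) (b : F) :
  @inner (prodIPS E F) p (a, b) = inner (fst p) a + inner (snd p) b.
Proof. reflexivity. Qed.

Lemma part1 {H1 H2 : IPS} (L : prodIPS H1 H2 -> R) G (hG : is_gradient L G) (x1 : H1) (x2 : H2) :
  forall e, 0 < e -> exists dl, 0 < dl /\ forall d, norm d < dl ->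
    Rabs ((fun y => L (y, x2)) (vadd x1 d) - (fun y => L (y, x2)) x1 - inner (fst (G (x1, x2))) d) <= e * norm d.
Proof.
  intros e He. destruct (hG (x1, x2) e He) as [dl [Hdl Hh]]. exists dl; split; auto. intros d Hd.
  assert (Hn : @norm (prodIPS H1 H2) (d, vzero) = norm d) by (rewrite norm_pair, inner_zero_l, Rplus_0_r; reflexivity).
  specialize (Hh (d, vzero)). rewrite Hn in Hh. specialize (Hh Hd).
  rewrite vadd_pair, vadd_0, inner_pair_r, inner_zero_r, Rplus_0_r in Hh. exact Hh.
Qed.

Lemma part2 {H1 H2 : IPS} (L : prodIPS H1 H2 -> R) G (hG : is_gradient L G) (x1 : H1) (x2 : H2) :
  forall e, 0 < e -> exists dl, 0 < dl /\ forall d, norm d < dl ->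
    Rabs ((fun y => - L (x1, y)) (vadd x2 d) - (fun y => - L (x1, y)) x2 - inner (vopp (snd (G (x1, x2)))) d) <= e * norm d.
Proof.
  intros e He. destruct (hG (x1, x2) e He) as [dl [Hdl Hh]]. exists dl; split; auto. intros d Hd.
  assert (Hn : @norm (prodIPS H1 H2) (vzero, d) = norm d) by (rewrite norm_pair, inner_zero_l, Rplus_0_l; reflexivity).
  specialize (Hh (vzero, d)). rewrite Hn in Hh. specialize (Hh Hd).
  rewrite vadd_pair, vadd_0, inner_pair_r, inner_zero_r, Rplus_0_l in Hh.
  rewrite inner_opp_l. replace (- L (x1, vadd x2 d) - - L (x1, x2) - - inner (snd (G (x1, x2))) d)
    with (- (L (x1, vadd x2 d) - L (x1, x2) - inner (snd (G (x1, x2))) d)) by ring.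
  rewrite Rabs_Ropp. exact Hh.
Qed.

Theorem proposition4p2
  (H1 H2 : Hilbert) (chi : R) (hchi : 0 < chi)
  (f : prodIPS H1 H2 -> ereal) (hf : Gamma0 f)
  (L : prodIPS H1 H2 -> R) (G : prodIPS H1 H2 -> prodIPS H1 H2)
  (hG : is_gradient L G) (hGlip : lipschitz chi G)
  (hconc : forall x1 : H1, convex_real (fun x2 : H2 => - L (x1, x2)))
  (hconv : forall x2 : H2, convex_real (fun x1 : H1 => L (x1, x2)))
  (hz : exists (z1 : H1) (z2 : H2),
      subdiff f (z1, z2) (vopp (fst (G (z1, z2))), snd (G (z1, z2))))
  (eps : R) (heps : 0 < eps < 1 / (chi + 1))
  (gamma : nat -> R) (hgamma : forall n, eps <= gamma n <= (1 - eps) / chi)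
  (a1 b1 c1 : nat -> H1) (a2 b2 c2 : nat -> H2)
  (ha1 : abs_summable a1) (hb1 : abs_summable b1) (hc1 : abs_summable c1)
  (ha2 : abs_summable a2) (hb2 : abs_summable b2) (hc2 : abs_summable c2)
  (x1 y1 p1 q1 : nat -> H1) (x2 y2 p2 q2 : nat -> H2)
  (hy1 : forall n, y1 n = vsub (x1 n)
           (vscal (gamma n) (vadd (fst (G (x1 n, x2 n))) (a1 n))))
  (hy2 : forall n, y2 n = vadd (x2 n)
           (vscal (gamma n) (vadd (snd (G (x1 n, x2 n))) (a2 n))))
  (hp : forall n, is_prox (gamma n) f (y1 n, y2 n)
           (vsub (p1 n) (b1 n), vsub (p2 n) (b2 n)))
  (hq1 : forall n, q1 n = vsub (p1 n)
           (vscal (gamma n) (vadd (fst (G (p1 n, p2 n))) (c1 n))))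
  (hq2 : forall n, q2 n = vadd (p2 n)
           (vscal (gamma n) (vadd (snd (G (p1 n, p2 n))) (c2 n))))
  (hx1 : forall n, x1 (S n) = vadd (vsub (x1 n) (y1 n)) (q1 n))
  (hx2 : forall n, x2 (S n) = vadd (vsub (x2 n) (y2 n)) (q2 n)) :
  exists (xb1 : H1) (xb2 : H2),
    (forall x : H1,
       ele (eaddr (f (xb1, xb2)) (L (xb1, xb2))) (eaddr (f (x, xb2)) (L (x, xb2)))) /\
    (forall x : H2,
       ele (eaddr (f (xb1, xb2)) (- L (xb1, xb2))) (eaddr (f (xb1, x)) (- L (xb1, x)))) /\
    weak_cv x1 xb1 /\ weak_cv p1 xb1 /\ weak_cv x2 xb2 /\ weak_cv p2 xb2.
Proof.
  destruct hf as [hfp [hfc hfl]].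
  set (B := fun x : prodIPS H1 H2 => ((fst (G x), vopp (snd (G x))) : prodIPS H1 H2)).
  assert (HBl : forall x y, norm (vsub (B x) (B y)) <= chi * norm (vsub x y)).
  { intros x y. eapply Rle_trans; [|apply hGlip]. right.
    unfold B. rewrite vsub_pair. destruct (G x) as [g1 g2], (G y) as [h1 h2]. cbn [fst snd].
    rewrite norm_pair. unfold norm. f_equal. change (inner (vsub g1 h1) (vsub g1 h1) + inner (vsub (vopp g2) (vopp h2)) (vsub (vopp g2) (vopp h2))
      = inner (vsub g1 h1) (vsub g1 h1) + inner (vsub g2 h2) (vsub g2 h2)).
    f_equal. iexp. ring. }
  assert (Hgi1 : forall (u1 v1 : H1) (u2 : H2), L (u1, u2) + inner (fst (G (u1, u2))) (vsub v1 u1) <= L (v1, u2)).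
  { intros u1 v1 u2. apply (grad_ineq (fun y => L (y, u2))); [apply hconv|apply part1; auto]. }
  assert (Hgi2 : forall (u1 : H1) (u2 v2 : H2), - L (u1, u2) + inner (vopp (snd (G (u1, u2)))) (vsub v2 u2) <= - L (u1, v2)).
  { intros u1 u2 v2. apply (grad_ineq (fun y => - L (u1, y))); [apply hconc|apply part2; auto]. }
  assert (HBm : forall x y, 0 <= inner (vsub (B x) (B y)) (vsub x y)).
  { intros [u1 u2] [v1 v2]. unfold B. cbn [fst snd]. rewrite !vsub_pair, inner_pair.
    pose proof (Hgi1 u1 v1 u2). pose proof (Hgi1 v1 u1 v2). pose proof (Hgi2 u1 u2 v2). pose proof (Hgi2 v1 v2 u2).
    iexp_in H. iexp_in H0. iexp_in H3. iexp_in H4. iexp. lra. }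
  set (X := fun n => ((x1 n, x2 n) : prodIPS H1 H2)).
  set (P := fun n => ((p1 n, p2 n) : prodIPS H1 H2)).
  set (a := fun n => ((a1 n, vopp (a2 n)) : prodIPS H1 H2)).
  set (b := fun n => ((b1 n, b2 n) : prodIPS H1 H2)).
  set (c := fun n => ((c1 n, vopp (c2 n)) : prodIPS H1 H2)).
  assert (Hs : forall (u : nat -> H1) (v : nat -> H2), abs_summable u -> abs_summable v ->
     summable (fun n => @norm (prodIPS H1 H2) (u n, v n))).
  { intros u v Hu Hv. apply (summable_le _ (fun n => norm (u n) + norm (v n))).
    - intro n; split; [apply norm_pos|apply norm_pair_le].
    - apply summable_plus; apply abs_summable_summable; auto. }
  assert (Hopp : forall v : nat -> H2, abs_summable v -> abs_summable (fun n => vopp (v n))).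
  { intros v [l Hl]; exists l. apply (cv_ext (sum_f_R0 (fun n => norm (v n)))); auto.
    intro N; apply sum_eq; intros; rewrite norm_opp; auto. }
  assert (hz' : exists z, Zer f B z).
  { destruct hz as [z1 [z2 Hz]]. exists (z1, z2). unfold Zer, B. rewrite vopp_pair.
    replace (vopp (vopp (snd (G (z1, z2))))) with (snd (G (z1, z2))) by vsolve. exact Hz. }
  assert (HY : forall n, Y B gamma a X n = (y1 n, y2 n)).
  { intro n. unfold Y, X, B, a. cbn [fst snd]. destruct (G (x1 n, x2 n)) as [g1 g2] eqn:EG. cbn [fst snd].
    rewrite vadd_pair, vscal_pair, vsub_pair. f_equal.
    - rewrite hy1, EG. reflexivity.
    - rewrite hy2, EG. cbn [snd]. vsolve. }
  assert (hp' : forall n, is_prox (gamma n) f (Y B gamma a X n) (Rp b P n)).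
  { intro n. rewrite HY. exact (hp n). }
  assert (hx' : forall n, X (S n) = vadd (vsub (X n) (Y B gamma a X n)) (Q B gamma c P n)).
  { intro n. rewrite HY. unfold Q, X, P, B, c. cbn [fst snd]. destruct (G (p1 n, p2 n)) as [g1 g2] eqn:EG. cbn [fst snd].
    rewrite vadd_pair, vscal_pair, !vsub_pair, vadd_pair. f_equal.
    - rewrite hx1, hq1, EG. reflexivity.
    - rewrite hx2, hq2, EG. cbn [snd]. vsolve. }
  destruct (main_abstract (prod_complete (hcomplete H1) (hcomplete H2)) f hfp hfc hfl B chi hchi HBl HBm
     eps heps gamma hgamma a b c (Hs _ _ ha1 (Hopp _ ha2)) (Hs _ _ hb1 hb2) (Hs _ _ hc1 (Hopp _ hc2))
     X P hz' hp' hx') as [[xb1 xb2] [Hz [HwX HwP]]].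
  exists xb1, xb2.
  unfold Zer, subdiff, B in Hz. cbn [fst snd] in Hz. rewrite vopp_pair in Hz. destruct Hz as [Hfin Hsub].
  destruct (f (xb1, xb2)) as [fx|] eqn:Efx; [|congruence].
  split; [|split; [|split; [|split; [|split]]]].
  - intro x. specialize (Hsub (x, xb2)). specialize (Hgi1 xb1 x xb2).
    destruct (f (x, xb2)) as [fy|]; [|cbn; auto]. cbn [ele eaddr] in Hsub |- *.
    rewrite vsub_pair, inner_pair in Hsub. iexp_in Hsub. iexp_in Hgi1.
    rewrite (inner_sym (fst (G (xb1, xb2))) x), (inner_sym (fst (G (xb1, xb2))) xb1) in Hgi1. lra.
  - intro x. specialize (Hsub (xb1, x)). specialize (Hgi2 xb1 xb2 x).
    destruct (f (xb1, x)) as [fy|]; [|cbn; auto]. cbn [ele eaddr] in Hsub |- *.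
    rewrite vsub_pair, inner_pair in Hsub. iexp_in Hsub. iexp_in Hgi2.
    rewrite (inner_sym (snd (G (xb1, xb2))) x), (inner_sym (snd (G (xb1, xb2))) xb2) in Hgi2. lra.
  - exact (weak_fst _ _ _ _ HwX).
  - exact (weak_fst _ _ _ _ HwP).
  - exact (weak_snd _ _ _ _ HwX).
  - exact (weak_snd _ _ _ _ HwP).
Qed.
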